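(* Let $\mathbb{M}=(a,b,[a],[b],[b^{-1}])$ be a Markov system satisfying properties ( * ) and ( ** ), where ( * ) holds with respect to the enumeration with first gap $I_1$. Let $\phi_{\mathbb{M}}:G\to\mathrm{Homeo}_+(S^1)$ be the homomorphism with $\phi_{\mathbb{M}}(\alpha)=a$, $\phi_{\mathbb{M}}(\beta)=b$. Then $\phi_{\mathbb{M}}$ is a dynamical realization of some circular order of $G$, based at some point $x_0\in I_1$.
   Context: $G=\langle\alpha,\beta\mid\alpha^2=\beta^3=e\rangle$. A circular order on $G$ is $c:G^3\to\{0,\pm1\}$ with $c(g_1,g_2,g_3)=0$ iff two $g_i$ coincide, $c(g_2,g_3,g_4)-c(g_1,g_3,g_4)+c(g_1,g_2,g_4)-c(g_1,g_2,g_3)=0$, and $c(g_4g_1,g_4g_2,g_4g_3)=c(g_1,g_2,g_3)$. An action $\rho$ is tight at $x_0$ if the stabilizer of $x_0$ is trivial and both endpoints of each gap of $\overline{\rho(G)x_0}$ lie in $\rho(G)x_0$; a dynamical realization of $c$ based at $x_0$ is an action tight at $x_0$ such that $c(g_1,g_2,g_3)=\pm1$ according as $\rho(g_i)x_0$ are distinct and anticlockwise/clockwise. A Markov system is a tuple $(a,b,[a],[b],[b^{-1}])$ with $a$ an orientation-preserving involution of $S^1$, $b$ an orientation-preserving homeomorphism of $S^1$ of period three, and $[a],[b],[b^{-1}]\subset S^1$ with: (A) pairwise disjoint, each a union of $k$ disjoint closed intervals; $X=[a]\cup[b]\cup[b^{-1}]$; (B) no two $a$-intervals (resp. $b$-,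 $b^{-1}$-intervals) are consecutive among components of $X$; principal gaps: gaps of $X$ between an $a$-interval and a $b^{\pm1}$-interval; complementary gaps: between a $b$- and a $b^{-1}$-interval; $[[b]]$: union of maximal intervals made of $b^{\pm1}$-intervals and complementary gaps; (C) $a([a])=[[b]]$; (D) $b([a])=[b]$, $b([b])=[b^{-1}]$; (E) $a$ maps principal gaps to principal gaps, exactly one of $b^{\pm1}$ maps a given principal gap to a principal gap, and the graph on principal gaps joining $J$ to $a(J)$ and to that image is connected. By (E) the principal gaps can be enumerated $I_1,I_1',\dots,I_k,I_k'$ with $b_i(I_i)=I_i'$, $b_i\in\{b,b^{-1}\}$, and $a(I_i')=I_{i+1}$ (mod $k$); $f_1=a\circ b_k\circ\cdots\circ a\circ b_1$ maps $I_1$ to itself. Property ( * ): $f_1$ has no fixed point in the open interval $I_1$ and $f_1^n(z)\to$ (endpoint of $I_1$ in $[a]$) for all $z\in I_1$. Property ( ** ): $X_\infty=\bigcap_{f}f^{-1}(X)$, $f$ ranging over the group generated by $a,b$, has empty interior. *)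

(* Defs.v *)
From Stdlib Require Import Reals Lra ZArith List Bool.
From Stdlib Require Import Relations Relation_Operators ClassicalEpsilon.
Import ListNotations.
Open Scope R_scope.

(* The circle S^1 = R/Z, points represented by their unique lift in [0,1). *)
Definition S1 : Type := { x : R | 0 <= x < 1 }.
Definition pos (x : S1) : R := proj1_sig x.

(* (x,y,z) are pairwise distinct and positively (anticlockwise) oriented,
   anticlockwise = direction of increasing angle 2*pi*t. *)
Definition ccw (x y z : S1) : Prop :=
  (pos x < pos y < pos z) \/ (pos y < pos z < pos x) \/ (pos z < pos x < pos y).

Definition dist (x y : S1) : R :=
  Rmin (Rabs (pos x - pos y)) (1 - Rabs (pos x - pos y)).

Definition Cont (f : S1 -> S1) : Prop :=
  forall x eps, 0 < eps -> exists delta, 0 < delta /\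
    forall y, dist x y < delta -> dist (f x) (f y) < eps.

Definition OrientHomeo (f : S1 -> S1) : Prop :=
  exists g : S1 -> S1,
    (forall x, g (f x) = x) /\ (forall x, f (g x) = x) /\
    Cont f /\ Cont g /\
    (forall x y z, ccw x y z -> ccw (f x) (f y) (f z)).

Definition closure (K : S1 -> Prop) (x : S1) : Prop :=
  forall eps, 0 < eps -> exists y, K y /\ dist x y < eps.

(* closed arc [u,v] (anticlockwise from u to v), used with u <> v *)
Definition carc (u v x : S1) : Prop := x = u \/ x = v \/ ccw u x v.

(* open arc (p,q) anticlockwise from p to q; when p = q it is S^1 \ {p} *)
Definition oarc (p q x : S1) : Prop := ccw p x q \/ (p = q /\ x <> p).

Definition isGap (K : S1 -> Prop) (p q : S1) : Prop :=
  K p /\ K q /\ (exists x, oarc p q x) /\ (forall x, oarc p q x -> ~ K x).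

Definition UnionOfArcs (k : nat) (S : S1 -> Prop) : Prop :=
  exists u v : nat -> S1,
    (forall i, (i < k)%nat -> u i <> v i) /\
    (forall i j x, (i < k)%nat -> (j < k)%nat -> i <> j ->
        carc (u i) (v i) x -> carc (u j) (v j) x -> False) /\
    (forall x, S x <-> exists i, (i < k)%nat /\ carc (u i) (v i) x).

(* Markov systems.  Gaps are represented by their endpoint pairs (p,q),
   the gap being the open arc (p,q).  b^{-1} = b o b since b^3 = id. *)
Section Markov.
Variables (a b : S1 -> S1) (A B Bi : S1 -> Prop).

Definition Xset (x : S1) : Prop := A x \/ B x \/ Bi x.

Definition gimg (f : S1 -> S1) (J : S1 * S1) : S1 * S1 := (f (fst J), f (snd J)).

Definition binv (x : S1) : S1 := b (b x).

Definition PrincipalGap (J : S1 * S1) : Prop :=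
  isGap Xset (fst J) (snd J) /\
  ((A (fst J) /\ (B (snd J) \/ Bi (snd J))) \/
   ((B (fst J) \/ Bi (fst J)) /\ A (snd J))).

Definition ComplementaryGap (J : S1 * S1) : Prop :=
  isGap Xset (fst J) (snd J) /\
  ((B (fst J) /\ Bi (snd J)) \/ (Bi (fst J) /\ B (snd J))).

(* [[b]] = union of the b^{+-1}-intervals and the complementary gaps *)
Definition BB (x : S1) : Prop :=
  B x \/ Bi x \/ exists J, ComplementaryGap J /\ oarc (fst J) (snd J) x.

Definition gapEdge (J J' : S1 * S1) : Prop :=
  PrincipalGap J /\ PrincipalGap J' /\
  (J' = gimg a J \/ J' = gimg b J \/ J' = gimg binv J).

Definition MarkovSystem (k : nat) : Prop :=
  (0 < k)%nat /\
  OrientHomeo a /\ (forall x, a (a x) = x) /\ (exists x, a x <> x) /\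
  OrientHomeo b /\ (forall x, b (b (b x)) = x) /\ (exists x, b x <> x) /\
  UnionOfArcs k A /\ UnionOfArcs k B /\ UnionOfArcs k Bi /\
  (forall x, A x -> B x -> False) /\ (forall x, A x -> Bi x -> False) /\
  (forall x, B x -> Bi x -> False) /\
  (forall p q, isGap Xset p q ->
     ~ (A p /\ A q) /\ ~ (B p /\ B q) /\ ~ (Bi p /\ Bi q)) /\
  (forall y, BB y <-> exists x, A x /\ a x = y) /\
  (forall y, B y <-> exists x, A x /\ b x = y) /\
  (forall y, Bi y <-> exists x, B x /\ b x = y) /\
  (forall J, PrincipalGap J -> PrincipalGap (gimg a J)) /\
  (forall J, PrincipalGap J ->
     (PrincipalGap (gimg b J) <-> ~ PrincipalGap (gimg binv J))) /\
  (forall J J', PrincipalGap J -> PrincipalGap J' ->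
     clos_refl_sym_trans _ gapEdge J J').

Definition bsel (J : S1 * S1) : S1 -> S1 :=
  if excluded_middle_informative (PrincipalGap (gimg b J)) then b else binv.

(* chainF n J = a o b_n o ... o a o b_1 along the enumeration starting at J *)
Fixpoint chainF (n : nat) (J : S1 * S1) : S1 -> S1 :=
  match n with
  | O => fun x => x
  | S n' => fun x =>
      chainF n' (gimg a (gimg (bsel J) J)) (a (bsel J x))
  end.

Definition StarProp (k : nat) (I1 : S1 * S1) : Prop :=
  let f1 := chainF k I1 in
  (forall z, oarc (fst I1) (snd I1) z -> f1 z <> z) /\
  (forall e, A e -> (e = fst I1 \/ e = snd I1) ->
     forall z, oarc (fst I1) (snd I1) z ->
       forall eps, 0 < eps -> exists N : nat, forall n : nat, (N <= n)%nat ->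
         dist (Nat.iter n f1 z) e < eps).
End Markov.

(* The group G = <alpha, beta | alpha^2 = beta^3 = e> = Z/2 * Z/3,
   elements = reduced words in alpha (LA), beta (LB), beta^2 (LB2). *)
Inductive letter := LA | LB | LB2.

Definition compat (x y : letter) : bool :=
  match x, y with
  | LA, LA => false
  | LA, _ => true
  | _, LA => true
  | _, _ => false
  end.

Fixpoint reduced (w : list letter) : bool :=
  match w with
  | [] => true
  | x :: w' => match w' with [] => true | y :: _ => compat x y && reduced w' end
  end.

Definition mulL (l : letter) (w : list letter) : list letter :=
  match l, w with
  | LA, LA :: w' => w'
  | LB, LB :: w' => LB2 :: w'
  | LB, LB2 :: w' => w'
  | LB2, LB :: w' => w'
  | LB2, LB2 :: w' => LB :: w'
  | _, _ => l :: w
  end.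

Lemma reduced_tail x w : reduced (x :: w) = true -> reduced w = true.
Proof.
  destruct w as [|y w]; simpl; auto.
  intro H; apply andb_prop in H; tauto.
Qed.

Lemma mulL_reduced l w : reduced w = true -> reduced (mulL l w) = true.
Proof.
  intro H.
  destruct l; destruct w as [|y w]; try reflexivity;
  destruct y; try (exact (reduced_tail _ _ H));
  destruct w as [|z w]; try reflexivity;
  destruct z; simpl in *; try discriminate; try exact H;
  try (rewrite H; reflexivity).
Qed.

Lemma fold_mulL_reduced u w :
  reduced w = true -> reduced (fold_right mulL w u) = true.
Proof.
  intro H; induction u as [|l u IH]; simpl; auto.
  apply mulL_reduced; exact IH.
Qed.

Definition G : Type := { w : list letter | reduced w = true }.

Definition gmul (g h : G) : G :=
  exist _ (fold_right mulL (proj1_sig h) (proj1_sig g))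
        (fold_mulL_reduced (proj1_sig g) _ (proj2_sig h)).

Definition circular_order (c : G -> G -> G -> Z) : Prop :=
  (forall g1 g2 g3, c g1 g2 g3 = 0%Z \/ c g1 g2 g3 = 1%Z \/ c g1 g2 g3 = (-1)%Z) /\
  (forall g1 g2 g3, c g1 g2 g3 = 0%Z <-> (g1 = g2 \/ g1 = g3 \/ g2 = g3)) /\
  (forall g1 g2 g3 g4,
     (c g2 g3 g4 - c g1 g3 g4 + c g1 g2 g4 - c g1 g2 g3)%Z = 0%Z) /\
  (forall g1 g2 g3 g4,
     c (gmul g4 g1) (gmul g4 g2) (gmul g4 g3) = c g1 g2 g3).

Fixpoint evalw (a b : S1 -> S1) (w : list letter) (x : S1) : S1 :=
  match w with
  | [] => x
  | LA :: w' => a (evalw a b w' x)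
  | LB :: w' => b (evalw a b w' x)
  | LB2 :: w' => b (b (evalw a b w' x))
  end.

Definition phi (a b : S1 -> S1) (g : G) : S1 -> S1 := evalw a b (proj1_sig g).

Definition gid : G := exist _ [] eq_refl.

(* Property "star-star" : X_infty = intersection of phi(g)^{-1}(X) has empty interior *)
Definition StarStarProp (a b : S1 -> S1) (A B Bi : S1 -> Prop) : Prop :=
  forall x eps, 0 < eps ->
    ~ (forall y, dist x y < eps -> forall g : G, Xset A B Bi (phi a b g y)).

Definition orbit (a b : S1 -> S1) (x0 : S1) (y : S1) : Prop :=
  exists g : G, phi a b g x0 = y.

Definition tight_at (a b : S1 -> S1) (x0 : S1) : Prop :=
  (forall g : G, phi a b g x0 = x0 -> g = gid) /\
  (forall p q, isGap (closure (orbit a b x0)) p q ->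
     orbit a b x0 p /\ orbit a b x0 q).

Definition dyn_realization (a b : S1 -> S1) (c : G -> G -> G -> Z) (x0 : S1) : Prop :=
  tight_at a b x0 /\
  forall g1 g2 g3,
    (c g1 g2 g3 = 1%Z <-> ccw (phi a b g1 x0) (phi a b g2 x0) (phi a b g3 x0)) /\
    (c g1 g2 g3 = (-1)%Z <-> ccw (phi a b g3 x0) (phi a b g2 x0) (phi a b g1 x0)).

(* Main.v *)
From Stdlib Require Import Reals Lra ZArith List Bool Lia Classical ClassicalEpsilon ProofIrrelevance Relations Relation_Operators.
Require Import Defs.
Import ListNotations.
Open Scope R_scope.

Lemma S1_eq (x y : S1) : pos x = pos y -> x = y.
Proof. destruct x as [x hx], y as [y hy]; simpl; intros ->. f_equal; apply proof_irrelevance. Qed.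

Lemma pos_rng (x:S1) : 0 <= pos x < 1. Proof. exact (proj2_sig x). Qed.

Definition ccwR (a b c : R) : Prop := (a<b<c) \/ (b<c<a) \/ (c<a<b).
Definition distR (u v : R) : R := Rmin (Rabs (u-v)) (1 - Rabs (u-v)).

Definition rotv (x y : S1) : R :=
  if Rle_dec (pos x) (pos y) then pos y - pos x else pos y - pos x + 1.

Lemma rotv_rng x y : 0 <= rotv x y < 1.
Proof. unfold rotv. pose proof (pos_rng x); pose proof (pos_rng y).
  destruct Rle_dec; lra. Qed.

Lemma rotv_self x : rotv x x = 0.
Proof. unfold rotv. destruct Rle_dec; lra. Qed.

Lemma rotv_inj x a b : rotv x a = rotv x b -> a = b.
Proof. unfold rotv. pose proof (pos_rng x); pose proof (pos_rng a); pose proof (pos_rng b).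
  intro E; apply S1_eq. repeat destruct Rle_dec; lra. Qed.

Ltac ccw_solve := first [ left; lra | right; left; lra | right; right; lra ].

Lemma ccw_rot x a b c : ccw a b c <-> ccwR (rotv x a) (rotv x b) (rotv x c).
Proof.
  unfold ccw, ccwR, rotv.
  pose proof (pos_rng x); pose proof (pos_rng a); pose proof (pos_rng b); pose proof (pos_rng c).
  repeat destruct Rle_dec; split; intros [Hc|[Hc|Hc]]; ccw_solve.
Qed.

Lemma dist_rot x a b : dist a b = distR (rotv x a) (rotv x b).
Proof.
  unfold dist, distR, rotv.
  pose proof (pos_rng x); pose proof (pos_rng a); pose proof (pos_rng b).
  unfold Rmin, Rabs.
  repeat destruct Rle_dec; repeat destruct Rcase_abs; lra.
Qed.

Lemma ccw_cyc x y z : ccw x y z -> ccw y z x.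
Proof. unfold ccw; intros [Ha|[Ha|Ha]]; ccw_solve. Qed.

Lemma ccw_asym x y z : ccw x y z -> ~ ccw z y x.
Proof. unfold ccw; intros [Ha|[Ha|Ha]] [H'|[H'|H']]; lra. Qed.

Lemma ccw_neq x y z : ccw x y z -> x <> y /\ y <> z /\ x <> z.
Proof. unfold ccw; intros Hc; repeat split; intro E; subst; destruct Hc as [Ha|[Ha|Ha]]; lra. Qed.

Lemma pos_neq x y : x <> y -> pos x <> pos y.
Proof. intros H E; apply H, S1_eq, E. Qed.

Lemma ccw_total x y z : x <> y -> y <> z -> x <> z -> ccw x y z \/ ccw z y x.
Proof. intros H1 H2 H3. apply pos_neq in H1; apply pos_neq in H2; apply pos_neq in H3.
  unfold ccw. destruct (Rlt_le_dec (pos x) (pos y)); destruct (Rlt_le_dec (pos y) (pos z));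
  destruct (Rlt_le_dec (pos x) (pos z));
  first [ left; ccw_solve | right; ccw_solve | lra ]. Qed.

Lemma rotv_pos x y : y <> x -> 0 < rotv x y.
Proof. intros H. pose proof (rotv_rng x y). destruct (Req_dec (rotv x y) 0) as [E|E].
  - exfalso; apply H, (rotv_inj x); rewrite E, rotv_self; reflexivity.
  - lra. Qed.

Lemma ccw_base p a b : ccw p a b <-> 0 < rotv p a < rotv p b.
Proof. rewrite (ccw_rot p). unfold ccwR. rewrite rotv_self.
  pose proof (rotv_rng p a); pose proof (rotv_rng p b).
  split; [intros [H1|[H1|H1]]; lra| intros; ccw_solve]. Qed.

Lemma oarc_base p q x : oarc p q x ->
  0 < rotv x q <= rotv x p /\
  (forall y, oarc p q y <-> rotv x y < rotv x q \/ rotv x p < rotv x y).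
Proof.
  intros [Hc|[E Hx]].
  - pose proof (ccw_neq _ _ _ Hc) as (N1&N2&N3).
    pose proof (rotv_pos x p N1). pose proof (rotv_pos x q (not_eq_sym N2)).
    assert (Hr := proj1 (ccw_rot x _ _ _) Hc). unfold ccwR in Hr. rewrite rotv_self in Hr.
    assert (rotv x q < rotv x p) by (destruct Hr as [Ha|[Ha|Ha]]; lra).
    split; [lra|]. intros y. pose proof (rotv_rng x y). unfold oarc. rewrite (ccw_rot x). unfold ccwR.
    split.
    + intros [Hb|[E _]]; [destruct Hb as [Ha|[Ha|Ha]]; lra| subst; lra].
    + intros [Hb|Hb]; left; ccw_solve.
  - subst q. pose proof (rotv_pos x p (not_eq_sym Hx)). split; [lra|].
    intros y; unfold oarc; split.
    + intros [Hb|[_ Hy]].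
      * rewrite (ccw_rot x) in Hb; unfold ccwR in Hb; lra.
      * assert (rotv x y <> rotv x p) by (intro E; apply Hy, (rotv_inj x), E). lra.
    + intros Hb; right; split; [reflexivity|]. intro E; subst; lra.
Qed.

Lemma gap_unique (K : S1 -> Prop) p q p' q' x :
  isGap K p q -> isGap K p' q' -> oarc p q x -> oarc p' q' x -> p = p' /\ q = q'.
Proof.
  intros (Kp&Kq&_&G) (Kp'&Kq'&_&G') H H'.
  destruct (oarc_base _ _ _ H) as [R1 R2]. destruct (oarc_base _ _ _ H') as [R1' R2'].
  assert (A1 : ~ oarc p q p') by (intro Z; exact (G _ Z Kp')).
  assert (A2 : ~ oarc p q q') by (intro Z; exact (G _ Z Kq')).
  assert (A3 : ~ oarc p' q' p) by (intro Z; exact (G' _ Z Kp)).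
  assert (A4 : ~ oarc p' q' q) by (intro Z; exact (G' _ Z Kq)).
  rewrite R2 in A1, A2. rewrite R2' in A3, A4.
  apply not_or_and in A1; apply not_or_and in A2; apply not_or_and in A3; apply not_or_and in A4.
  split; apply (rotv_inj x); lra.
Qed.

Lemma gap_fst (K : S1 -> Prop) p q q' : isGap K p q -> isGap K p q' -> q = q'.
Proof.
  intros (Kp&Kq&_&G) (_&Kq'&_&G').
  destruct (classic (q = p)) as [E|E]; [subst q|];
  destruct (classic (q' = p)) as [E'|E']; [subst q'| |subst q'|]; try reflexivity.
  - exfalso; apply (G q'); [right; split; auto| exact Kq'].
  - exfalso; apply (G' q); [right; split; auto| exact Kq].
  - destruct (classic (q = q')) as [|N]; [assumption|exfalso].
    destruct (ccw_total p q q') as [C|C]; auto.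
    + apply (G' q); [left; exact C|exact Kq].
    + apply (G q'); [left; apply ccw_cyc, ccw_cyc; exact C| exact Kq'].
Qed.

Lemma gap_snd (K : S1 -> Prop) p p' q : isGap K p q -> isGap K p' q -> p = p'.
Proof.
  intros (Kp&Kq&_&G) (Kp'&_&_&G').
  destruct (classic (q = p)) as [E|E]; [subst q|];
  destruct (classic (p' = p)) as [E'|E']; try (symmetry; assumption).
  - exfalso; apply (G p'); [right; split; auto| exact Kp'].
  - destruct (classic (p' = q)) as [E2|E2].
    + subst p'. exfalso; apply (G' p); [right; split; auto| exact Kp].
    + exfalso. destruct (ccw_total p p' q) as [C|C]; auto.
      * apply (G p'); [left; exact C| exact Kp'].
      * apply (G' p); [left; apply ccw_cyc; exact C| exact Kp].
Qed.

Lemma dist_self x : dist x x = 0.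
Proof. unfold dist. rewrite Rminus_diag, Rabs_R0. unfold Rmin; destruct Rle_dec; lra. Qed.

Lemma dist_sym x y : dist x y = dist y x.
Proof. unfold dist. rewrite Rabs_minus_sym. reflexivity. Qed.

Lemma dist_nonneg x y : 0 <= dist x y.
Proof. unfold dist, Rmin. pose proof (pos_rng x); pose proof (pos_rng y).
  unfold Rabs; repeat destruct Rle_dec; repeat destruct Rcase_abs; lra. Qed.

Lemma dist_tri x y z : dist x z <= dist x y + dist y z.
Proof. unfold dist, Rmin. pose proof (pos_rng x); pose proof (pos_rng y); pose proof (pos_rng z).
  unfold Rabs; repeat destruct Rle_dec; repeat destruct Rcase_abs; lra. Qed.

Lemma dist_zero x y : dist x y = 0 -> x = y.
Proof. intros H; apply S1_eq. revert H. unfold dist, Rmin. pose proof (pos_rng x); pose proof (pos_rng y).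
  unfold Rabs; repeat destruct Rle_dec; repeat destruct Rcase_abs; lra. Qed.

Lemma dist_pos x y : x <> y -> 0 < dist x y.
Proof. intros H. pose proof (dist_nonneg x y). destruct (Req_dec (dist x y) 0) as [E|E].
  - exfalso; apply H, dist_zero, E.
  - lra. Qed.

Lemma ball_oarc u v x : oarc u v x -> exists eps, 0 < eps /\ forall y, dist x y < eps -> oarc u v y.
Proof.
  intros H. destruct (oarc_base _ _ _ H) as [R1 R2].
  pose proof (rotv_rng x u).
  exists (Rmin (rotv x v) (1 - rotv x u)). split.
  - unfold Rmin; destruct Rle_dec; lra.
  - intros y Hy. apply R2. rewrite (dist_rot x) in Hy. rewrite rotv_self in Hy.
    pose proof (rotv_rng x y). revert Hy. unfold distR, Rmin, Rabs.
    repeat destruct Rle_dec; repeat destruct Rcase_abs; lra.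
Qed.

Lemma conv_snd p z q : ccw p z q -> exists eps, 0 < eps /\
  forall w, ccw p w q -> dist w q < eps -> ccw z w q.
Proof.
  intros H. apply ccw_base in H. pose proof (rotv_rng p q).
  exists (Rmin (rotv p q - rotv p z) (1 - rotv p q)). split.
  - unfold Rmin; destruct Rle_dec; lra.
  - intros w Hw Hd. apply ccw_base in Hw. rewrite (dist_rot p) in Hd.
    rewrite (ccw_rot p). unfold ccwR. left.
    revert Hd. unfold distR, Rmin, Rabs.
    repeat destruct Rle_dec; repeat destruct Rcase_abs; lra.
Qed.

Lemma conv_fst p z q : ccw p z q -> exists eps, 0 < eps /\
  forall w, ccw p w q -> dist w p < eps -> ccw p w z.
Proof.
  intros H. apply ccw_base in H. pose proof (rotv_rng p q).
  exists (Rmin (rotv p z) (1 - rotv p q)). split.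
  - unfold Rmin; destruct Rle_dec; lra.
  - intros w Hw Hd. apply ccw_base in Hw. rewrite (dist_rot p), rotv_self in Hd.
    apply ccw_base. split; [lra|].
    revert Hd. unfold distR, Rmin, Rabs.
    repeat destruct Rle_dec; repeat destruct Rcase_abs; lra.
Qed.

Lemma ccw_trans_base p x y z : ccw p x y -> ccw p y z -> ccw p x z.
Proof. rewrite !ccw_base. lra. Qed.

Lemma between3 p u z v : ccw p u z -> ccw p z v -> ccw u z v.
Proof. intros H1 H2. rewrite ccw_base in H1, H2. rewrite (ccw_rot p). unfold ccwR. lra. Qed.

Lemma arc_between p q u v o : ccw p u q -> ccw p v q -> ccw p u v -> oarc u v o ->
  ccw p o q /\ ccw p u o /\ ccw p o v.
Proof.
  intros H1 H2 H3 Ho. pose proof (ccw_neq _ _ _ H3) as (_&Nuv&_).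
  destruct Ho as [C|[E _]]; [|contradiction].
  rewrite ccw_base in H1, H2, H3. rewrite (ccw_rot p) in C. unfold ccwR in C.
  rewrite !ccw_base. pose proof (rotv_rng p o). destruct C as [C|[C|C]]; lra.
Qed.

Lemma ccw_asym_base p x y : ccw p x y -> ~ ccw p y x.
Proof. intros H1 H2. rewrite ccw_base in H1, H2. lra. Qed.

Lemma base_snd p z w q : ccw p z q -> ccw p w q -> ccw z w q -> ccw p z w.
Proof. intros H1 H2 H3. rewrite ccw_base in H1, H2 |- *. rewrite (ccw_rot p) in H3. unfold ccwR in H3.
  lra. Qed.
Definition linv (l : letter) : letter := match l with LA => LA | LB => LB2 | LB2 => LB end.
Definition winv (u : list letter) : list letter := rev (map linv u).

Lemma winv_cons l u : winv (l :: u) = winv u ++ [linv l].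
Proof. unfold winv. simpl. reflexivity. Qed.

Lemma mulL_cons l w : reduced (l :: w) = true -> mulL l w = l :: w.
Proof. destruct l, w as [|x w]; try reflexivity; destruct x; simpl; try reflexivity;
  intro H; try discriminate; destruct w as [|y w]; try discriminate; destruct y; discriminate. Qed.

Lemma red_reduced w : reduced w = true -> fold_right mulL [] w = w.
Proof. induction w as [|l w IH]; intros H; [reflexivity|].
  simpl. rewrite IH by (exact (reduced_tail _ _ H)). apply mulL_cons, H. Qed.

Lemma mulL_inv l z : reduced z = true -> mulL l (mulL (linv l) z) = z.
Proof. intros H. destruct l, z as [|x z]; try reflexivity; destruct x; simpl; try reflexivity;
  destruct z as [|y z]; try reflexivity; destruct y; simpl in H; try discriminate; reflexivity. Qed.

Lemma fold_cancel u z : reduced z = true -> fold_right mulL z (u ++ winv u) = z.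
Proof.
  revert z; induction u as [|l u IH]; intros z Hz; [reflexivity|].
  rewrite winv_cons. simpl. rewrite app_assoc, fold_right_app. simpl.
  rewrite IH by (apply mulL_reduced, Hz).
  apply mulL_inv, Hz.
Qed.

Section Homeo.
Variables (a b : S1 -> S1).
Hypotheses (Ha : OrientHomeo a) (Haa : forall x, a (a x) = x)
           (Hb : OrientHomeo b) (Hbbb : forall x, b (b (b x)) = x).

Definition lfw (l : letter) : S1 -> S1 := evalw a b [l].

Lemma lf_LA x : lfw LA x = a x. Proof. reflexivity. Qed.
Lemma lf_LB x : lfw LB x = b x. Proof. reflexivity. Qed.
Lemma lf_LB2 x : lfw LB2 x = b (b x). Proof. reflexivity. Qed.

Lemma evalw_cons l w x : evalw a b (l :: w) x = lfw l (evalw a b w x).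
Proof. destruct l; reflexivity. Qed.

Lemma evalw_app u v x : evalw a b (u ++ v) x = evalw a b u (evalw a b v x).
Proof. induction u as [|l u IH]; [reflexivity|]. simpl app. rewrite !evalw_cons, IH. reflexivity. Qed.

Lemma lf_linv l x : lfw (linv l) (lfw l x) = x.
Proof. destruct l; unfold lfw; simpl; auto. Qed.

Lemma lf_linv' l x : lfw l (lfw (linv l) x) = x.
Proof. destruct l; unfold lfw; simpl; auto. Qed.

Lemma evalw_winv u x : evalw a b (winv u) (evalw a b u x) = x.
Proof. induction u as [|l u IH]; [reflexivity|].
  rewrite winv_cons, evalw_app, !evalw_cons. change (evalw a b [] ?y) with y.
  rewrite lf_linv. apply IH. Qed.

Lemma evalw_winv' u x : evalw a b u (evalw a b (winv u) x) = x.
Proof. revert x; induction u as [|l u IH]; intros x; [reflexivity|].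
  rewrite winv_cons, evalw_app, !evalw_cons. change (evalw a b [] ?y) with y.
  rewrite IH. apply lf_linv'. Qed.

Lemma evalw_inj u x y : evalw a b u x = evalw a b u y -> x = y.
Proof. intros E. rewrite <- (evalw_winv u x), <- (evalw_winv u y), E. reflexivity. Qed.

Lemma OH_ccw f : OrientHomeo f -> forall x y z, ccw x y z -> ccw (f x) (f y) (f z).
Proof. intros (g&_&_&_&_&H). exact H. Qed.

Lemma OH_cont f : OrientHomeo f -> Cont f.
Proof. intros (g&_&_&H&_). exact H. Qed.

Lemma lf_ccw l x y z : ccw x y z -> ccw (lfw l x) (lfw l y) (lfw l z).
Proof. intros H. destruct l; unfold lfw; simpl; repeat (apply OH_ccw; [assumption|]); exact H. Qed.

Lemma evalw_ccw u x y z : ccw x y z -> ccw (evalw a b u x) (evalw a b u y) (evalw a b u z).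
Proof. induction u as [|l u IH]; intros H; [exact H|]. rewrite !evalw_cons. apply lf_ccw, IH, H. Qed.

Lemma evalw_ccw_iff u x y z : ccw (evalw a b u x) (evalw a b u y) (evalw a b u z) <-> ccw x y z.
Proof. split; [|apply evalw_ccw]. intros H. apply (evalw_ccw (winv u)) in H.
  rewrite !evalw_winv in H. exact H. Qed.

Lemma Cont_comp f g : Cont f -> Cont g -> Cont (fun x => f (g x)).
Proof. intros Hf Hg x eps He. destruct (Hf (g x) eps He) as (d1&Hd1&H1).
  destruct (Hg x d1 Hd1) as (d2&Hd2&H2). exists d2; split; auto. Qed.

Lemma Cont_id : Cont (fun x => x).
Proof. intros x eps He; exists eps; split; auto. Qed.

Lemma Cont_ext f g : (forall x, f x = g x) -> Cont f -> Cont g.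
Proof. intros E Hf x eps He. destruct (Hf x eps He) as (d&Hd&H). exists d; split; auto.
  intros y Hy. rewrite <- !E. apply H, Hy. Qed.

Lemma lf_cont l : Cont (lfw l).
Proof. destruct l.
  - apply (Cont_ext a); [reflexivity| apply OH_cont, Ha].
  - apply (Cont_ext b); [reflexivity| apply OH_cont, Hb].
  - apply (Cont_ext (fun x => b (b x))); [reflexivity|].
    apply Cont_comp; apply OH_cont, Hb.
Qed.

Lemma evalw_cont u : Cont (evalw a b u).
Proof. induction u as [|l u IH]; [exact Cont_id|].
  apply (Cont_ext (fun x => lfw l (evalw a b u x))).
  - intros x; rewrite evalw_cons; reflexivity.
  - apply Cont_comp; [apply lf_cont | exact IH].
Qed.

Lemma evalw_mulL l w x : evalw a b (mulL l w) x = evalw a b (l :: w) x.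
Proof. destruct l, w as [|y w]; try reflexivity; destruct y; simpl; auto. Qed.

Lemma evalw_red u x : evalw a b (fold_right mulL [] u) x = evalw a b u x.
Proof. induction u as [|l u IH]; [reflexivity|]. simpl fold_right. rewrite evalw_mulL, !evalw_cons, IH. reflexivity. Qed.

Lemma evalw_fold g h x : evalw a b (fold_right mulL h g) x = evalw a b g (evalw a b h x).
Proof. induction g as [|l g IH]; [reflexivity|]. simpl fold_right. rewrite evalw_mulL, !evalw_cons, IH. reflexivity. Qed.

Lemma phi_gmul g h x : phi a b (gmul g h) x = phi a b g (phi a b h x).
Proof. unfold phi, gmul; simpl. apply evalw_fold. Qed.

Definition gofw (u : list letter) : G := exist _ (fold_right mulL [] u) (fold_mulL_reduced u [] eq_refl).

Lemma phi_gofw u x : phi a b (gofw u) x = evalw a b u x.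
Proof. unfold phi, gofw; simpl. apply evalw_red. Qed.

Lemma orbit_evalw x0 y u : orbit a b x0 y -> orbit a b x0 (evalw a b u y).
Proof. intros [g Hg]. exists (gofw (u ++ proj1_sig g)). rewrite phi_gofw, evalw_app. rewrite <- Hg. reflexivity. Qed.

Lemma orbit_self x0 : orbit a b x0 x0.
Proof. exists gid. reflexivity. Qed.

Lemma orbit_iff x0 y : orbit a b x0 y <-> exists u, evalw a b u x0 = y.
Proof. split.
  - intros [g Hg]. exists (proj1_sig g). exact Hg.
  - intros [u Hu]. subst y. apply orbit_evalw, orbit_self. Qed.

Lemma G_eq (g h : G) : proj1_sig g = proj1_sig h -> g = h.
Proof. destruct g as [g Hg], h as [h Hh]; simpl; intros ->. f_equal; apply proof_irrelevance. Qed.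

Lemma phi_inj x0 : (forall g : G, phi a b g x0 = x0 -> g = gid) ->
  forall g1 g2 : G, phi a b g1 x0 = phi a b g2 x0 -> g1 = g2.
Proof.
  intros Free g1 g2 E. destruct g1 as [w1 R1], g2 as [w2 R2]. unfold phi in E; simpl in E.
  pose (g := gofw (winv w1 ++ w2)).
  assert (Hg : phi a b g x0 = x0).
  { unfold g. rewrite phi_gofw, evalw_app, <- E, evalw_winv. reflexivity. }
  apply Free in Hg. apply (f_equal (@proj1_sig _ _)) in Hg. unfold g, gofw in Hg; simpl in Hg.
  rewrite fold_right_app, red_reduced in Hg by exact R2.
  apply G_eq; simpl.
  rewrite <- (fold_cancel w1 w2 R2), fold_right_app, Hg.
  symmetry; apply red_reduced, R1.
Qed.

Lemma closure_evalw x0 u y : closure (orbit a b x0) y -> closure (orbit a b x0) (evalw a b u y).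
Proof.
  intros Hc eps He. destruct (evalw_cont u y eps He) as (d&Hd&H).
  destruct (Hc d Hd) as (o&Ho&Hdo). exists (evalw a b u o). split.
  - apply orbit_evalw, Ho.
  - apply H, Hdo.
Qed.

Lemma oarc_evalw u p q x : oarc p q x -> oarc (evalw a b u p) (evalw a b u q) (evalw a b u x).
Proof. intros [H|[E N]]; [left; apply evalw_ccw, H| right; split; [subst; reflexivity|]].
  intros E'; apply N, (evalw_inj u), E'. Qed.

Lemma isGap_evalw (K : S1 -> Prop) u p q :
  (forall y, K y -> K (evalw a b u y)) -> (forall y, K y -> K (evalw a b (winv u) y)) ->
  isGap K p q -> isGap K (evalw a b u p) (evalw a b u q).
Proof.
  intros H1 H2 (Kp&Kq&(x&Hx)&G). repeat split; auto.
  - exists (evalw a b u x). apply oarc_evalw, Hx.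
  - intros y Hy Ky. apply (G (evalw a b (winv u) y)).
    + rewrite <- (evalw_winv u p), <- (evalw_winv u q). apply oarc_evalw, Hy.
    + apply H2, Ky.
Qed.

End Homeo.
Section Consec.
Variables (D O : S1 -> Prop) (R : S1 -> S1 -> Prop) (hh : S1 -> S1) (x0 : S1).
Hypotheses (Rtrans : forall x y z, R x y -> R y z -> R x z)
  (Rasym : forall x y, R x y -> ~ R y x)
  (Rtot : forall x y, D x -> D y -> x <> y -> R x y \/ R y x)
  (Dh : forall x, D x -> D (hh x))
  (hmono : forall x y, R x y -> R (hh x) (hh y))
  (hsurj : forall y, D y -> O y -> exists y', D y' /\ O y' /\ hh y' = y)
  (Ox0 : O x0) (Dx0 : D x0) (hO : forall y, O y -> O (hh y))
  (nofix : forall x, D x -> hh x <> x)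
  (conv1 : forall z, D z -> exists N, R z (Nat.iter N hh x0))
  (conv2 : forall z, D z -> exists M, R x0 (Nat.iter M hh z))
  (Qdesc : forall y, D y -> O y -> exists i j, Nat.iter i hh y = Nat.iter j hh x0).

Lemma Rirr x : ~ R x x.
Proof. intros H. exact (Rasym x x H H). Qed.

Lemma it_D n x : D x -> D (Nat.iter n hh x).
Proof. intros H; induction n; simpl; auto. Qed.
Lemma it_O n x : O x -> O (Nat.iter n hh x).
Proof. intros H; induction n; simpl; auto. Qed.
Lemma it_mono n x y : R x y -> R (Nat.iter n hh x) (Nat.iter n hh y).
Proof. intros H; induction n; simpl; auto. Qed.
Lemma it_comm n x : Nat.iter n hh (hh x) = hh (Nat.iter n hh x).
Proof. induction n as [|n IH]; [reflexivity|]. simpl. rewrite IH. reflexivity. Qed.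
Lemma it_add m n x : Nat.iter (m + n) hh x = Nat.iter m hh (Nat.iter n hh x).
Proof. induction m as [|m IH]; [reflexivity|]. simpl. rewrite IH. reflexivity. Qed.

Lemma reflectR x y : D x -> D y -> R (hh x) (hh y) -> R x y.
Proof. intros Hx Hy H. destruct (classic (x = y)) as [E|N].
  - subst; exfalso; exact (Rirr _ H).
  - destruct (Rtot x y Hx Hy N) as [C|C]; auto. exfalso; exact (Rasym _ _ H (hmono _ _ C)). Qed.


Lemma it_reflect n x y : D x -> D y -> R (Nat.iter n hh x) (Nat.iter n hh y) -> R x y.
Proof. revert x y; induction n as [|n IH]; intros x y Hx Hy H; [exact H|].
  apply reflectR; auto. apply IH; auto. rewrite !it_comm. exact H. Qed.

Lemma up0 : R x0 (hh x0).
Proof.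
  destruct (Rtot x0 (hh x0) Dx0 (Dh _ Dx0) (not_eq_sym (nofix _ Dx0))) as [C|C]; [exact C|exfalso].
  assert (Hd : forall n, (0 < n)%nat -> R (Nat.iter n hh x0) x0).
  { intros n Hn. induction n as [|n IH]; [lia|]. destruct n as [|n]; [exact C|].
    apply (Rtrans _ (Nat.iter (S n) hh x0)); [|apply IH; lia].
    change (Nat.iter (S (S n)) hh x0) with (hh (Nat.iter (S n) hh x0)). rewrite <- it_comm.
    apply it_mono, C. }
  destruct (conv1 x0 Dx0) as (N&HN). destruct N as [|N]; [exact (Rirr _ HN)|].
  exact (Rasym _ _ HN (Hd (S N) ltac:(lia))).
Qed.

Lemma a_incr m n : (m < n)%nat -> R (Nat.iter m hh x0) (Nat.iter n hh x0).
Proof. intros H. induction n as [|n IH]; [lia|].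
  assert (Hs : R (Nat.iter n hh x0) (Nat.iter (S n) hh x0)).
  { change (Nat.iter (S n) hh x0) with (hh (Nat.iter n hh x0)). rewrite <- it_comm. apply it_mono, up0. }
  destruct (Nat.eq_dec m n) as [E|N]; [subst; exact Hs|]. apply (Rtrans _ _ _ (IH ltac:(lia)) Hs). Qed.

Lemma a_incr_iff m n : R (Nat.iter m hh x0) (Nat.iter n hh x0) -> (m < n)%nat.
Proof. intros H. destruct (Nat.lt_ge_cases m n) as [|Hl]; auto. exfalso.
  destruct (Nat.eq_dec m n) as [E|N]; [subst; exact (Rirr _ H)|].
  exact (Rasym _ _ H (a_incr n m ltac:(lia))). Qed.


Lemma Q_u_o u o : O u -> D u -> O o -> D o -> R u o -> R o (hh u) -> False.
Proof.
  intros Ou Du Oo Do H1 H2.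
  destruct (Qdesc u Du Ou) as (i1&j1&E1). destruct (Qdesc o Do Oo) as (i2&j2&E2).
  apply (it_mono (i1 + i2)) in H1. apply (it_mono (i1 + i2)) in H2.
  assert (Eu : Nat.iter (i1 + i2) hh u = Nat.iter (i2 + j1) hh x0).
  { rewrite Nat.add_comm, it_add, E1, <- it_add. reflexivity. }
  assert (Eo : Nat.iter (i1 + i2) hh o = Nat.iter (i1 + j2) hh x0).
  { rewrite it_add, E2, <- it_add. reflexivity. }
  assert (Eu' : Nat.iter (i1 + i2) hh (hh u) = Nat.iter (S (i2 + j1)) hh x0).
  { rewrite it_comm, Eu. reflexivity. }
  rewrite Eu, Eo in H1. rewrite Eo, Eu' in H2.
  apply a_incr_iff in H1. apply a_incr_iff in H2. lia.
Qed.

Lemma least (P : nat -> Prop) n : P n -> exists m, P m /\ forall j, (j < m)%nat -> ~ P j.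
Proof.
  revert n. apply (well_founded_induction lt_wf (fun n => P n -> exists m, P m /\ forall j, (j < m)%nat -> ~ P j)).
  intros n IH Hn.
  destruct (classic (exists j, (j < n)%nat /\ P j)) as [(j&Hj&Pj)|N].
  - exact (IH j Hj Pj).
  - exists n; split; auto. intros j Hj Pj; apply N; eauto.
Qed.

Lemma it_surj n y : D y -> O y -> exists y', D y' /\ O y' /\ Nat.iter n hh y' = y.
Proof. revert y; induction n as [|n IH]; intros y Dy Oy; [exists y; auto|].
  destruct (hsurj y Dy Oy) as (y1&D1&O1&E1). destruct (IH y1 D1 O1) as (y2&D2&O2&E2).
  exists y2; repeat split; auto. simpl. rewrite E2; exact E1. Qed.

Lemma consec z : D z -> ~ O z ->
  exists u, O u /\ D u /\ R u z /\ R z (hh u) /\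
    forall o, D o -> O o -> R u o -> R o (hh u) -> False.
Proof.
  intros Dz Nz.
  assert (Nz' : z <> x0) by (intros E; subst; exact (Nz Ox0)).
  destruct (Rtot x0 z Dx0 Dz (not_eq_sym Nz')) as [C|C].
  - destruct (conv1 z Dz) as (N&HN).
    destruct (least (fun n => R z (Nat.iter n hh x0)) N HN) as (n&Hn&Hmin).
    destruct n as [|n]; [exfalso; exact (Rasym _ _ C Hn)|].
    exists (Nat.iter n hh x0). repeat split.
    + apply it_O, Ox0.
    + apply it_D, Dx0.
    + assert (Nq : ~ R z (Nat.iter n hh x0)) by (apply Hmin; lia).
      assert (Ne : Nat.iter n hh x0 <> z) by (intros E; apply Nz; rewrite <- E; apply it_O, Ox0).
      destruct (Rtot _ _ (it_D n x0 Dx0) Dz Ne) as [C'|C']; [exact C'|contradiction].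
    + rewrite <- it_comm. simpl in Hn. rewrite <- it_comm in Hn. exact Hn.
    + intros o Do Oo H1 H2. eapply Q_u_o; [| | exact Oo | exact Do | exact H1 | exact H2];
        [apply it_O, Ox0 | apply it_D, Dx0].
  - destruct (conv2 z Dz) as (M&HM).
    destruct (least (fun n => R x0 (Nat.iter n hh z)) M HM) as (m&Hm&Hmin).
    destruct m as [|m]; [exfalso; exact (Rasym _ _ C Hm)|].
    destruct (it_surj (S m) x0 Dx0 Ox0) as (u&Du&Ou&Eu).
    exists u. repeat split; auto.
    + apply (it_reflect (S m)); auto. rewrite Eu. exact Hm.
    + assert (Nq : ~ R x0 (Nat.iter m hh z)) by (apply Hmin; lia).
      assert (Ne : Nat.iter m hh z <> x0).
      { intros E. destruct (it_surj m x0 Dx0 Ox0) as (v&Dv&Ov&Ev).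
        apply Nz. assert (z = v).
        { destruct (classic (z = v)) as [|N']; auto. exfalso.
          destruct (Rtot z v Dz Dv N') as [C'|C'].
          - apply (it_mono m) in C'. rewrite E, Ev in C'. exact (Rirr _ C').
          - apply (it_mono m) in C'. rewrite E, Ev in C'. exact (Rirr _ C'). }
        subst; exact Ov. }
      destruct (Rtot _ _ (it_D m z Dz) Dx0 Ne) as [C'|C']; [|contradiction].
      apply (it_reflect m); auto.
      replace (Nat.iter m hh (hh u)) with x0; [exact C'|].
      rewrite <- Eu. simpl. symmetry; apply it_comm.
    + intros o Do Oo H1 H2. eapply Q_u_o; [exact Ou | exact Du | exact Oo | exact Do | exact H1 | exact H2].
Qed.
End Consec.
Lemma argmin (f : nat -> R) n : (0 < n)%nat -> exists i, (i < n)%nat /\ forall j, (j < n)%nat -> f i <= f j.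
Proof.
  induction n as [|n IH]; intros Hn; [lia|].
  destruct n as [|n].
  - exists 0%nat; split; [lia|]. intros j Hj; assert (j = 0%nat) by lia; subst; lra.
  - destruct (IH ltac:(lia)) as (i&Hi&Hm).
    destruct (Rle_dec (f i) (f (S n))) as [Hle|Hgt].
    + exists i; split; [lia|]. intros j Hj. destruct (Nat.eq_dec j (S n)) as [->|N]; [exact Hle|].
      apply Hm; lia.
    + exists (S n); split; [lia|]. intros j Hj. destruct (Nat.eq_dec j (S n)) as [->|N]; [lra|].
      specialize (Hm j ltac:(lia)). lra.
Qed.

Lemma argmax (f : nat -> R) n : (0 < n)%nat -> exists i, (i < n)%nat /\ forall j, (j < n)%nat -> f j <= f i.
Proof. intros Hn. destruct (argmin (fun i => - f i) n Hn) as (i&Hi&Hm). exists i; split; auto.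
  intros j Hj; specialize (Hm j Hj); lra. Qed.

Lemma carc_out z u v x : u <> v -> ~ carc u v z -> carc u v x ->
  0 < rotv z u < rotv z v /\ rotv z u <= rotv z x <= rotv z v.
Proof.
  intros Nuv Nz Hx.
  assert (Nu : u <> z) by (intros E; apply Nz; left; auto).
  assert (Nv : v <> z) by (intros E; apply Nz; right; left; auto).
  assert (Nc : ~ ccw u z v) by (intros C; apply Nz; right; right; exact C).
  pose proof (rotv_pos z u Nu). pose proof (rotv_pos z v Nv).
  assert (Hne : rotv z u <> rotv z v) by (intros E; apply Nuv, (rotv_inj z), E).
  rewrite (ccw_rot z) in Nc. unfold ccwR in Nc. rewrite rotv_self in Nc.
  assert (Hlt : rotv z u < rotv z v).
  { destruct (Rlt_le_dec (rotv z u) (rotv z v)); auto. exfalso; apply Nc. right; left; lra. }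
  split; [lra|].
  destruct Hx as [E|[E|C]]; [subst; lra|subst; lra|].
  rewrite (ccw_rot z) in C. unfold ccwR in C. pose proof (rotv_rng z x). destruct C as [C|[C|C]]; lra.
Qed.

Lemma gap_exists_gen (n : nat) (U V : nat -> S1) (Y : S1 -> Prop) z :
  (0 < n)%nat -> (forall i, (i < n)%nat -> U i <> V i) ->
  (forall x, Y x <-> exists i, (i < n)%nat /\ carc (U i) (V i) x) -> ~ Y z ->
  exists p q, isGap Y p q /\ oarc p q z.
Proof.
  intros Hn HUV HY Nz.
  assert (Hout : forall i x, (i < n)%nat -> carc (U i) (V i) x ->
     0 < rotv z (U i) < rotv z (V i) /\ rotv z (U i) <= rotv z x <= rotv z (V i)).
  { intros i x Hi Hx. apply carc_out; auto. intros Hc; apply Nz, HY; eauto. }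
  destruct (argmin (fun i => rotv z (U i)) n Hn) as (i0&Hi0&Hm).
  destruct (argmax (fun i => rotv z (V i)) n Hn) as (j0&Hj0&HM).
  set (q := U i0). set (p := V j0).
  assert (Yq : Y q) by (apply HY; exists i0; split; [exact Hi0| left; reflexivity]).
  assert (Yp : Y p) by (apply HY; exists j0; split; [exact Hj0| right; left; reflexivity]).
  assert (Hq : 0 < rotv z q) by (destruct (Hout i0 q Hi0 (or_introl eq_refl)); lra).
  assert (Hqp : rotv z q < rotv z p).
  { pose proof (Hm j0 Hj0). destruct (Hout j0 p Hj0 (or_intror (or_introl eq_refl))) as [H1 _].
    unfold p, q in *; simpl in *; lra. }
  assert (Hzin : oarc p q z).
  { left. rewrite (ccw_rot z). unfold ccwR. rewrite rotv_self. right; left; lra. }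
  exists p, q. split; [|exact Hzin].
  repeat split; auto.
  - exists z; exact Hzin.
  - intros x Hx Yx. apply HY in Yx as (i&Hi&Hc). destruct (Hout i x Hi Hc) as [_ [H1 H2]].
    pose proof (Hm i Hi). pose proof (HM i Hi).
    destruct Hx as [C|[E _]].
    + rewrite (ccw_rot z) in C. unfold ccwR in C. pose proof (rotv_rng z x).
      unfold p, q in *; simpl in *. destruct C as [C|[C|C]]; lra.
    + assert (rotv z p = rotv z q) by (rewrite E; reflexivity). lra.
Qed.
Definition sg (x y : R) : Z :=
  match total_order_T x y with inleft (left _) => 1%Z | inleft (right _) => 0%Z | inright _ => (-1)%Z end.
Definition sg3 (x y z : R) : Z := (sg x y * sg y z * sg x z)%Z.

Lemma sg3_vals x y z : sg3 x y z = 0%Z \/ sg3 x y z = 1%Z \/ sg3 x y z = (-1)%Z.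
Proof. unfold sg3, sg. destruct (total_order_T x y) as [[|]|]; destruct (total_order_T y z) as [[|]|];
  destruct (total_order_T x z) as [[|]|]; simpl; auto. Qed.

Lemma sg3_one x y z : sg3 x y z = 1%Z <-> ccwR x y z.
Proof. unfold sg3, sg, ccwR. destruct (total_order_T x y) as [[|]|]; destruct (total_order_T y z) as [[|]|];
  destruct (total_order_T x z) as [[|]|]; simpl; split; intros Hc; try discriminate; try reflexivity;
  try ccw_solve; destruct Hc as [Hc|[Hc|Hc]]; lra. Qed.

Lemma sg3_mone x y z : sg3 x y z = (-1)%Z <-> ccwR z y x.
Proof. unfold sg3, sg, ccwR. destruct (total_order_T x y) as [[|]|]; destruct (total_order_T y z) as [[|]|];
  destruct (total_order_T x z) as [[|]|]; simpl; split; intros Hc; try discriminate; try reflexivity;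
  try ccw_solve; destruct Hc as [Hc|[Hc|Hc]]; lra. Qed.

Lemma sg3_zero x y z : sg3 x y z = 0%Z <-> (x = y \/ x = z \/ y = z).
Proof. unfold sg3, sg. destruct (total_order_T x y) as [[|]|]; destruct (total_order_T y z) as [[|]|];
  destruct (total_order_T x z) as [[|]|]; simpl; split; intros Hc; try discriminate; try reflexivity;
  try (destruct Hc as [Hc|[Hc|Hc]]; lra); try (left; lra); try (right; left; lra); try (right; right; lra). Qed.

Lemma sg3_cocycle r1 r2 r3 r4 :
  (sg3 r2 r3 r4 - sg3 r1 r3 r4 + sg3 r1 r2 r4 - sg3 r1 r2 r3)%Z = 0%Z.
Proof. unfold sg3, sg.
  destruct (total_order_T r1 r2) as [[|]|]; destruct (total_order_T r1 r3) as [[|]|];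
  destruct (total_order_T r1 r4) as [[|]|]; destruct (total_order_T r2 r3) as [[|]|];
  destruct (total_order_T r2 r4) as [[|]|]; destruct (total_order_T r3 r4) as [[|]|];
  first [reflexivity | exfalso; lra].
Qed.

Definition sgp (x y z : S1) : Z := sg3 (pos x) (pos y) (pos z).

Lemma sgp_one x y z : sgp x y z = 1%Z <-> ccw x y z.
Proof. apply sg3_one. Qed.
Lemma sgp_mone x y z : sgp x y z = (-1)%Z <-> ccw z y x.
Proof. apply sg3_mone. Qed.
Lemma sgp_zero x y z : sgp x y z = 0%Z <-> (x = y \/ x = z \/ y = z).
Proof. unfold sgp. rewrite sg3_zero. split.
  - intros [E|[E|E]]; [left|right;left|right;right]; apply S1_eq, E.
  - intros [E|[E|E]]; subst; auto. Qed.
Section Markov2.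
Variables (a b : S1 -> S1) (A B Bi : S1 -> Prop) (k : nat).
Hypotheses (Ha : OrientHomeo a) (Haa : forall x, a (a x) = x)
           (Hb : OrientHomeo b) (Hbbb : forall x, b (b (b x)) = x).
Hypotheses (dAB : forall x, A x -> B x -> False) (dABi : forall x, A x -> Bi x -> False)
           (dBBi : forall x, B x -> Bi x -> False).
Hypothesis HBc : forall p q, isGap (Xset A B Bi) p q ->
     ~ (A p /\ A q) /\ ~ (B p /\ B q) /\ ~ (Bi p /\ Bi q).
Hypothesis HC : forall y, BB A B Bi y <-> exists x, A x /\ a x = y.
Hypothesis HD1 : forall y, B y <-> exists x, A x /\ b x = y.
Hypothesis HD2 : forall y, Bi y <-> exists x, B x /\ b x = y.
Hypothesis HE1 : forall J, PrincipalGap A B Bi J -> PrincipalGap A B Bi (gimg a J).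

Notation X := (Xset A B Bi).
Notation PG := (PrincipalGap A B Bi).
Notation CG := (ComplementaryGap A B Bi).
Notation BBs := (BB A B Bi).
Notation lf := (lfw a b).
Notation evalw := (evalw a b).

Lemma tA_b x : A x -> B (b x). Proof. intros H; apply HD1; eauto. Qed.
Lemma tB_b x : B x -> Bi (b x). Proof. intros H; apply HD2; eauto. Qed.
Lemma tBi_b x : Bi x -> A (b x).
Proof. intros H. apply HD2 in H as (y&Hy&<-). apply HD1 in Hy as (z&Hz&<-). rewrite Hbbb; exact Hz. Qed.
Lemma tA_a x : A x -> BBs (a x). Proof. intros H; apply HC; eauto. Qed.
Lemma tBB_a x : BBs x -> A (a x). Proof. intros H; apply HC in H as (y&Hy&<-). rewrite Haa; exact Hy. Qed.

Lemma BB_A x : BBs x -> A x -> False.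
Proof. intros [H|[H|(J&(G&_)&Hx)]] HA; eauto.
  destruct G as (_&_&_&G). apply (G x Hx). left; exact HA. Qed.

Lemma tA_bb x : A x -> Bi (b (b x)). Proof. intros H; apply tB_b, tA_b, H. Qed.
Lemma tB_bb x : B x -> A (b (b x)). Proof. intros H; apply tBi_b, tB_b, H. Qed.
Lemma tBi_bb x : Bi x -> B (b (b x)). Proof. intros H; apply tA_b, tBi_b, H. Qed.

Lemma X_b x : X x -> X (b x).
Proof. intros [H|[H|H]]; unfold Xset.
  - right; left; apply tA_b, H.
  - right; right; apply tB_b, H.
  - left; apply tBi_b, H. Qed.

Lemma X_bb x : X x -> X (b (b x)).
Proof. intros H; apply X_b, X_b, H. Qed.

Lemma X_a x : X x -> BBs x \/ A x.
Proof. intros [H|[H|H]]; [right|left; left|left; right; left]; exact H. Qed.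

Lemma gap_b p q : isGap X p q -> isGap X (b p) (b q).
Proof. intros G. eapply (isGap_evalw a b) with (u := [LB]); eauto.
  - intros y Hy. apply X_b, Hy.
  - intros y Hy. apply X_bb, Hy. Qed.

Lemma gap_bb p q : isGap X p q -> isGap X (b (b p)) (b (b q)).
Proof. intros G. eapply (isGap_evalw a b) with (u := [LB2]); eauto.
  - intros y Hy. apply X_bb, Hy.
  - intros y Hy. apply X_b, Hy. Qed.

Lemma CG_not_PG J : CG J -> PG J -> False.
Proof. intros (_&[[H1 H2]|[H1 H2]]) (_&[[H3 [H4|H4]]|[[H3|H3] H4]]); eauto. Qed.

Lemma b_types J : PG J ->
  (PG (gimg b J) /\ CG (gimg (lf LB2) J)) \/ (PG (gimg (lf LB2) J) /\ CG (gimg b J)).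
Proof.
  destruct J as [p q]. intros [G T]. simpl in *.
  pose proof (gap_b _ _ G) as Gb. pose proof (gap_bb _ _ G) as Gbb.
  unfold PrincipalGap, ComplementaryGap, gimg; simpl. unfold lfw; simpl.
  destruct T as [[Ap [Bq|Bq]]|[[Bp|Bp] Aq]].
  - pose proof (tA_b _ Ap); pose proof (tB_b _ Bq); pose proof (tA_bb _ Ap); pose proof (tB_bb _ Bq).
    right; tauto.
  - pose proof (tA_b _ Ap); pose proof (tBi_b _ Bq); pose proof (tA_bb _ Ap); pose proof (tBi_bb _ Bq).
    left; tauto.
  - pose proof (tB_b _ Bp); pose proof (tA_b _ Aq); pose proof (tB_bb _ Bp); pose proof (tA_bb _ Aq).
    right; tauto.
  - pose proof (tBi_b _ Bp); pose proof (tA_b _ Aq); pose proof (tBi_bb _ Bp); pose proof (tA_bb _ Aq).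
    left; tauto.
Qed.

Definition bselL (J : S1*S1) : letter :=
  if excluded_middle_informative (PG (gimg b J)) then LB else LB2.

Lemma bsel_lf J x : bsel b A B Bi J x = lf (bselL J) x.
Proof. unfold bsel, bselL, binv. destruct excluded_middle_informative; reflexivity. Qed.

Lemma bsel_spec J : PG J -> PG (gimg (lf (bselL J)) J) /\
   (forall l, l <> LA -> l <> bselL J -> CG (gimg (lf l) J)).
Proof.
  intros HJ. unfold bselL.
  destruct (b_types J HJ) as [[P C]|[P C]]; destruct excluded_middle_informative as [e|n].
  - split; [exact P|]. intros l N1 N2; destruct l; try congruence; exact C.
  - contradiction.
  - exfalso; eapply CG_not_PG; eauto.
  - split; [exact P|]. intros l N1 N2; destruct l; try congruence; exact C.
Qed.

Lemma PG_LA J : PG J -> PG (gimg (lf LA) J).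
Proof. apply HE1. Qed.

Lemma PG_A J : PG J -> A (fst J) \/ A (snd J).
Proof. intros (_&[[H _]|[_ H]]); auto. Qed.

Lemma PG_neq J : PG J -> fst J <> snd J.
Proof. intros (_&[[H1 [H2|H2]]|[[H1|H1] H2]]) E; rewrite E in *; eauto. Qed.

Lemma lf_notA l x : A x -> ~ A (lf l x).
Proof. intros H1 H2. destruct l; unfold lfw in H2; simpl in H2.
  - exact (BB_A _ (tA_a _ H1) H2).
  - exact (dAB _ H2 (tA_b _ H1)).
  - exact (dABi _ H2 (tA_bb _ H1)). Qed.

Lemma gimg_neq l J : PG J -> gimg (lf l) J <> J.
Proof. intros HJ E. destruct J as [p q]. unfold gimg in E; simpl in E. injection E as E1 E2.
  destruct (PG_A _ HJ) as [H|H]; simpl in H.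
  - apply (lf_notA l p H). rewrite E1; exact H.
  - apply (lf_notA l q H). rewrite E2; exact H. Qed.

Lemma gimg_linv l J : gimg (lf (linv l)) (gimg (lf l) J) = J.
Proof. destruct J as [p q]. unfold gimg; simpl. rewrite !lf_linv; auto. Qed.

Lemma bselL_inv J : PG J -> bselL (gimg (lf (bselL J)) J) = linv (bselL J).
Proof.
  intros HJ. destruct (bsel_spec J HJ) as [P _].
  set (J' := gimg (lf (bselL J)) J) in *.
  assert (HP : PG (gimg (lf (linv (bselL J))) J')) by (unfold J'; rewrite gimg_linv; exact HJ).
  destruct (b_types J' P) as [[P1 C1]|[P1 C1]].
  - unfold bselL at 1. destruct excluded_middle_informative as [e|n]; [|contradiction].
    revert HP; unfold bselL; destruct excluded_middle_informative as [e'|n']; simpl; intros HP.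
    + exfalso; eapply CG_not_PG; eauto.
    + reflexivity.
  - unfold bselL at 1. destruct excluded_middle_informative as [e|n]; [exfalso; eapply CG_not_PG; eauto|].
    revert HP; unfold bselL; destruct excluded_middle_informative as [e'|n']; simpl; intros HP.
    + reflexivity.
    + exfalso; eapply CG_not_PG; [exact C1| exact HP].
Qed.

Lemma CG_b J : CG J -> PG (gimg b J).
Proof. destruct J as [p q]. intros [G T]; simpl in *. split; [apply gap_b, G|]. simpl.
  destruct T as [[Bp Biq]|[Bip Bq]].
  - right. split; [right; apply tB_b, Bp| apply tBi_b, Biq].
  - left. split; [apply tBi_b, Bip| right; apply tB_b, Bq]. Qed.

Lemma gap_class p q : isGap X p q -> PG (p,q) \/ CG (p,q).
Proof. intros G. pose proof (HBc p q G) as (N1&N2&N3). pose proof G as (Xp&Xq&G').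
  unfold PrincipalGap, ComplementaryGap; simpl.
  destruct Xp as [Hp|[Hp|Hp]]; destruct Xq as [Hq|[Hq|Hq]]; try tauto.
Qed.

Lemma PG_oarc_not J x : PG J -> oarc (fst J) (snd J) x -> ~ A x /\ ~ BBs x.
Proof.
  intros HJ Hx. pose proof HJ as [(_&_&_&G) _]. split.
  - intros H. apply (G x Hx). left; exact H.
  - intros [H|[H|(J'&HJ'&Hx')]].
    + apply (G x Hx). right; left; exact H.
    + apply (G x Hx). right; right; exact H.
    + destruct (gap_unique _ _ _ _ _ _ (proj1 HJ) (proj1 HJ') Hx Hx') as [E1 E2].
      destruct J as [p q], J' as [p' q']; simpl in *; subst.
      eapply CG_not_PG; eauto.
Qed.

Lemma CG_BB J x : CG J -> oarc (fst J) (snd J) x -> BBs x.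
Proof. intros H1 H2. right; right. exists J; auto. Qed.

Lemma A_LB x : A x -> BBs (lf LB x).
Proof. intros H; left; apply tA_b, H. Qed.
Lemma A_LB2 x : A x -> BBs (lf LB2 x).
Proof. intros H; right; left; apply tA_bb, H. Qed.
Lemma BB_LA x : BBs x -> A (lf LA x).
Proof. intros H; apply tBB_a, H. Qed.


Variable I1 : S1 * S1.
Hypothesis HI1 : PG I1.

Definition OA (J : S1 * S1) (x : S1) : Prop := oarc (fst J) (snd J) x.

Lemma lf_oarc l J x : OA J x -> OA (gimg (lf l) J) (lf l x).
Proof. intros H. destruct J as [p q]. unfold OA, gimg in *; simpl in *.
  eapply (oarc_evalw a b) with (u := [l]); eauto. Qed.

Lemma evalw_oarc u J x : OA J x -> OA (gimg (evalw u) J) (evalw u x).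
Proof. intros H. destruct J as [p q]. unfold OA, gimg in *; simpl in *.
  eapply (oarc_evalw a b); eauto. Qed.

Definition flof (n : nat) (J : S1*S1) : letter := if Nat.even n then bselL J else LA.
Fixpoint Jt (n : nat) : S1 * S1 :=
  match n with O => I1 | S m => gimg (lf (flof m (Jt m))) (Jt m) end.
Definition fl n := flof n (Jt n).
Definition bl n := if Nat.even n then LA else bselL (Jt n).

Lemma Jt_S n : Jt (S n) = gimg (lf (fl n)) (Jt n).
Proof. reflexivity. Qed.

Lemma Jt_PG n : PG (Jt n).
Proof. induction n as [|n IH]; [exact HI1|]. rewrite Jt_S. unfold fl, flof.
  destruct (Nat.even n); [apply (bsel_spec _ IH)| apply PG_LA, IH]. Qed.

Lemma bl_S n : bl (S n) = linv (fl n).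
Proof. unfold bl. rewrite Nat.even_succ, <- Nat.negb_even.
  rewrite Jt_S. destruct (Nat.even n) eqn:E; cbn [negb].
  - unfold fl, flof. rewrite E. apply bselL_inv, Jt_PG.
  - unfold fl, flof; rewrite E; reflexivity. Qed.

Lemma back_gimg n : gimg (lf (bl (S n))) (Jt (S n)) = Jt n.
Proof. rewrite bl_S, Jt_S. apply gimg_linv. Qed.

Lemma back_lf n x : lf (fl n) (lf (bl (S n)) x) = x.
Proof. rewrite bl_S. apply lf_linv'; auto. Qed.

Lemma back_lf' n x : lf (bl (S n)) (lf (fl n) x) = x.
Proof. rewrite bl_S. apply lf_linv; auto. Qed.

Lemma compat_bl_fl n : compat (bl (S n)) (fl n) = false.
Proof. rewrite bl_S; destruct (fl n); reflexivity. Qed.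

Lemma compat_fl_bl n : compat (fl n) (bl (S n)) = false.
Proof. rewrite bl_S; destruct (fl n); reflexivity. Qed.

Lemma letter_dec (l l' : letter) : {l = l'} + {l <> l'}.
Proof. decide equality. Qed.

Lemma letter_cases n l : l = fl n \/ l = bl n \/ (l <> LA /\ CG (gimg (lf l) (Jt n))).
Proof.
  destruct (bsel_spec (Jt n) (Jt_PG n)) as [_ C]. unfold fl, flof, bl.
  destruct (letter_dec l LA) as [E|N1]; [destruct (Nat.even n); subst; auto|].
  destruct (letter_dec l (bselL (Jt n))) as [E|N2]; [destruct (Nat.even n); subst; auto|].
  right; right; split; auto.
Qed.

Fixpoint fword (s m : nat) : list letter :=
  match m with O => [] | S m' => fl (s + m') :: fword s m' end.

Lemma fword_app s m n x : evalw (fword s (m + n)) x = evalw (fword (s + m) n) (evalw (fword s m) x).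
Proof. induction n as [|n IH].
  - rewrite Nat.add_0_r. reflexivity.
  - rewrite Nat.add_succ_r. simpl fword. rewrite !evalw_cons, IH, Nat.add_assoc. reflexivity. Qed.

Lemma gimg_comp f g J : gimg f (gimg g J) = gimg (fun x => f (g x)) J.
Proof. reflexivity. Qed.

Lemma fword_gimg s m : gimg (evalw (fword s m)) (Jt s) = Jt (s + m).
Proof. induction m as [|m IH].
  - rewrite Nat.add_0_r. destruct (Jt s); reflexivity.
  - rewrite Nat.add_succ_r, Jt_S, <- IH. simpl fword. unfold gimg; cbn [fst snd]. rewrite !evalw_cons. reflexivity. Qed.

Lemma fword_oarc s m x : OA (Jt s) x -> OA (Jt (s + m)) (evalw (fword s m) x).
Proof. intros H. rewrite <- fword_gimg. apply evalw_oarc, H. Qed.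

Lemma fword_S s m x : evalw (fword s (S m)) x = lf (fl (s + m)) (evalw (fword s m) x).
Proof. simpl fword. apply evalw_cons. Qed.

Lemma pwalk s x : OA (Jt s) x -> forall w, reduced w = true -> (length w <= s)%nat ->
  w = [] \/
  (exists m w', w = fl (s + m) :: w' /\ length w = S m /\
      evalw w x = evalw (fword s (S m)) x /\ OA (Jt (s + S m)) (evalw w x)) \/
  (exists m w', w = bl (s - m) :: w' /\ length w = S m /\
      evalw (fword (s - S m) (S m)) (evalw w x) = x /\ OA (Jt (s - S m)) (evalw w x)) \/
  (exists l w', w = l :: w' /\ l <> LA /\ BBs (evalw w x)) \/
  (exists w', w = LA :: w' /\ A (evalw w x)).
Proof.
  intros Hx w. induction w as [|l w0 IH]; intros Hr Hl; [left; reflexivity|right].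
  assert (Hr0 : reduced w0 = true) by (exact (reduced_tail _ _ Hr)).
  simpl in Hl.
  destruct (IH Hr0 ltac:(lia)) as [E|[(m&w1&E&Hlen&Hev&Ho)|[(m&w1&E&Hlen&Hev&Ho)|[(l0&w1&E&N&HB)|(w1&E&HA)]]]].
  - subst w0. destruct (letter_cases s l) as [E|[E|[N C]]].
    + left. exists 0%nat, []. subst l. split; [rewrite Nat.add_0_r; reflexivity|].
      split; [reflexivity|]. split.
      * simpl fword. rewrite Nat.add_0_r. reflexivity.
      * replace (s + 1)%nat with (S s) by lia. rewrite Jt_S.
        change (evalw [fl s] x) with (lf (fl s) x). apply lf_oarc, Hx.
    + right; left. exists 0%nat, []. subst l. rewrite Nat.sub_0_r. repeat split; auto.
      * destruct s as [|s]; [simpl in Hl; lia|]. simpl. rewrite Nat.sub_0_r, Nat.add_0_r.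
        change (evalw [bl (S s)] x) with (lf (bl (S s)) x). apply back_lf.
      * destruct s as [|s]; [simpl in Hl; lia|]. simpl. rewrite Nat.sub_0_r, <- back_gimg.
        apply lf_oarc, Hx.
    + right; right; left. exists l, []. repeat split; auto.
      apply (CG_BB _ _ C). apply lf_oarc, Hx.
  - subst w0. simpl in Hlen. injection Hlen as Hlen.
    assert (Hc : compat l (fl (s + m)) = true) by (simpl in Hr; apply andb_prop in Hr; tauto).
    destruct (letter_cases (s + S m) l) as [E|[E|[N C]]].
    + left. exists (S m), (fl (s + m) :: w1). repeat split.
      * rewrite E; reflexivity.
      * simpl; lia.
      * rewrite evalw_cons, Hev, fword_S with (m := S m). rewrite E. reflexivity.
      * rewrite Nat.add_succ_r, Jt_S, evalw_cons. rewrite E. apply lf_oarc, Ho.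
    + exfalso. rewrite E, Nat.add_succ_r, compat_bl_fl in Hc. discriminate.
    + right; right; left. exists l, (fl (s + m) :: w1). repeat split; auto.
      rewrite evalw_cons. apply (CG_BB _ _ C). apply lf_oarc, Ho.
  - subst w0. simpl in Hlen. injection Hlen as Hlen.
    assert (Hc : compat l (bl (s - m)) = true) by (simpl in Hr; apply andb_prop in Hr; tauto).
    assert (Hs : (S (S m) <= s)%nat) by (simpl in Hl; lia).
    destruct (letter_cases (s - S m) l) as [E|[E|[N C]]].
    + exfalso. replace (s - m)%nat with (S (s - S m)) in Hc by lia.
      rewrite E, compat_fl_bl in Hc. discriminate.
    + right; left. exists (S m), (bl (s - m) :: w1). repeat split.
      * rewrite E; reflexivity.
      * simpl; lia.
      * set (t := (s - S m)%nat) in *.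
        assert (Ht : t = S (t - 1)) by (unfold t; lia).
        replace (s - S (S m))%nat with (t - 1)%nat by (unfold t; lia).
        replace (S (S m)) with (1 + S m)%nat by lia.
        rewrite fword_app. replace (t - 1 + 1)%nat with t by lia.
        rewrite evalw_cons, E.
        assert (Hstep : forall y, evalw (fword (t-1) 1) (lf (bl t) y) = y).
        { intros y. simpl fword. rewrite Nat.add_0_r. change (evalw [fl ?n] ?z) with (lf (fl n) z).
          rewrite Ht at 2. apply back_lf. }
        rewrite Hstep. exact Hev.
      * set (t := (s - S m)%nat) in *.
        assert (Ht : t = S (t - 1)) by (unfold t; lia).
        replace (s - S (S m))%nat with (t - 1)%nat by (unfold t; lia).
        rewrite evalw_cons, E.
        rewrite <- (back_gimg (t-1)). rewrite <- Ht. apply lf_oarc, Ho.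
    + right; right; left. exists l, (bl (s - m) :: w1). repeat split; auto.
      rewrite evalw_cons. apply (CG_BB _ _ C). apply lf_oarc, Ho.
  - subst w0.
    assert (Hc : compat l l0 = true) by (simpl in Hr; apply andb_prop in Hr; tauto).
    assert (l = LA) by (destruct l, l0; simpl in Hc; congruence). subst l.
    right; right; right. exists (l0 :: w1). split; auto.
    rewrite evalw_cons. apply BB_LA, HB.
  - subst w0.
    assert (Hc : compat l LA = true) by (simpl in Hr; apply andb_prop in Hr; tauto).
    right; right; left. exists l, (LA :: w1). destruct l; simpl in Hc; try discriminate;
    repeat split; try discriminate; rewrite evalw_cons.
    + apply A_LB, HA.
    + apply A_LB2, HA.
Qed.
Lemma gimg_ext f g J : (forall x, f x = g x) -> gimg f J = gimg g J.
Proof. intros E; unfold gimg; rewrite !E; reflexivity. Qed.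

Lemma even_2i i : Nat.even (2 * i) = true.
Proof. rewrite Nat.even_mul. reflexivity. Qed.
Lemma even_2i1 i : Nat.even (S (2 * i)) = false.
Proof. rewrite Nat.even_succ, <- Nat.negb_even, even_2i. reflexivity. Qed.

Lemma chainF_fword n i x :
  chainF a b A B Bi n (Jt (2 * i)) x = evalw (fword (2 * i) (2 * n)) x.
Proof.
  revert i x; induction n as [|n IH]; intros i x; [reflexivity|].
  change (chainF a b A B Bi (S n) (Jt (2 * i)) x) with
    (chainF a b A B Bi n (gimg a (gimg (bsel b A B Bi (Jt (2 * i))) (Jt (2 * i))))
       (a (bsel b A B Bi (Jt (2 * i)) x))).
  assert (E1 : gimg (bsel b A B Bi (Jt (2 * i))) (Jt (2 * i)) = Jt (S (2 * i))).
  { rewrite Jt_S. apply gimg_ext. intros y. rewrite bsel_lf. unfold fl, flof. rewrite even_2i. reflexivity. }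
  assert (E2 : gimg a (Jt (S (2 * i))) = Jt (2 * S i)).
  { replace (2 * S i)%nat with (S (S (2 * i))) by lia. rewrite (Jt_S (S (2 * i))).
    unfold fl, flof. rewrite even_2i1. reflexivity. }
  rewrite E1, E2, IH.
  replace (2 * S n)%nat with (2 + 2 * n)%nat by lia. rewrite fword_app.
  replace (2 * i + 2)%nat with (2 * S i)%nat by lia. f_equal.
  change (fword (2 * i) 2) with [fl (2 * i + 1); fl (2 * i + 0)].
  rewrite !evalw_cons. change (evalw [] x) with x.
  rewrite bsel_lf, Nat.add_0_r. replace (2 * i + 1)%nat with (S (2 * i)) by lia.
  unfold fl, flof. rewrite even_2i, even_2i1. reflexivity.
Qed.

Definition F1 (x : S1) : S1 := evalw (fword 0 (2 * k)) x.

Lemma chainF_F1 x : chainF a b A B Bi k I1 x = F1 x.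
Proof. apply (chainF_fword k 0). Qed.

Lemma iter_ext (f g : S1 -> S1) n x : (forall y, f y = g y) -> Nat.iter n f x = Nat.iter n g x.
Proof. intros E; induction n as [|n IH]; [reflexivity|]. simpl. rewrite IH, E. reflexivity. Qed.

Lemma Jt_OA_I1 t y : OA (Jt t) y -> OA I1 y -> Jt t = I1.
Proof. intros H1 H2. destruct (gap_unique _ _ _ _ _ _ (proj1 (Jt_PG t)) (proj1 HI1) H1 H2) as [E1 E2].
  destruct (Jt t), I1; simpl in *; subst; reflexivity. Qed.

Lemma limit_fixed (f : S1 -> S1) (e z : S1) : Cont f ->
  (forall eps, 0 < eps -> exists N, forall n, (N <= n)%nat -> dist (Nat.iter n f z) e < eps) ->
  f e = e.
Proof.
  intros Hc Hl. apply dist_zero.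
  destruct (Req_dec (dist (f e) e) 0) as [E|N]; [exact E|exfalso].
  pose proof (dist_nonneg (f e) e) as H0. set (eps := dist (f e) e) in *.
  destruct (Hc e (eps/2) ltac:(lra)) as (d&Hd&Hcd).
  destruct (Hl d Hd) as (N1&H1). destruct (Hl (eps/2) ltac:(lra)) as (N2&H2).
  set (n := (N1 + N2)%nat).
  assert (A1 : dist (f e) (f (Nat.iter n f z)) < eps/2).
  { apply Hcd. rewrite dist_sym. apply H1. unfold n; lia. }
  assert (A2 : dist (Nat.iter (S n) f z) e < eps/2) by (apply H2; unfold n; lia).
  simpl in A2. pose proof (dist_tri (f e) (f (Nat.iter n f z)) e). unfold eps in *. lra.
Qed.

Hypothesis Hstar : StarProp a b A B Bi k I1.

Lemma J2k : Jt (2 * k) = I1.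
Proof.
  destruct Hstar as [_ Hconv].
  pose proof HI1 as [(Gp&Gq&(z&Hz)&GG) _].
  assert (Hfix : forall e, A e -> (e = fst I1 \/ e = snd I1) -> F1 e = e).
  { intros e He Hor. apply (limit_fixed F1 e z).
    - apply evalw_cont; auto.
    - intros eps Heps. destruct (Hconv e He Hor z Hz eps Heps) as (N&HN). exists N.
      intros n Hn. rewrite <- (iter_ext (chainF a b A B Bi k I1)) by apply chainF_F1. apply HN, Hn. }
  pose proof (fword_gimg 0 (2 * k)) as Eg. rewrite Nat.add_0_l in Eg.
  change (Jt 0) with I1 in Eg.
  destruct (PG_A _ HI1) as [H|H].
  - pose proof (Hfix _ H (or_introl eq_refl)) as Ef.
    pose proof (proj1 (Jt_PG (2 * k))) as G2. rewrite <- Eg in G2. unfold gimg in G2; cbn [fst snd] in G2.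
    unfold F1 in Ef. rewrite Ef in G2.
    pose proof (gap_fst _ _ _ _ (proj1 HI1) G2) as E.
    rewrite <- Eg. unfold gimg; rewrite Ef, <- E. destruct I1; reflexivity.
  - pose proof (Hfix _ H (or_intror eq_refl)) as Ef.
    pose proof (proj1 (Jt_PG (2 * k))) as G2. rewrite <- Eg in G2. unfold gimg in G2; cbn [fst snd] in G2.
    unfold F1 in Ef. rewrite Ef in G2.
    pose proof (gap_snd _ _ _ _ (proj1 HI1) G2) as E.
    rewrite <- Eg. unfold gimg; rewrite Ef, <- E. destruct I1; reflexivity.
Qed.
Lemma min_exists (P : nat -> Prop) n : P n -> exists m, P m /\ forall j, (j < m)%nat -> ~ P j.
Proof.
  revert n. apply (well_founded_induction lt_wf (fun n => P n -> exists m, P m /\ forall j, (j < m)%nat -> ~ P j)).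
  intros n IH Hn.
  destruct (classic (exists j, (j < n)%nat /\ P j)) as [(j&Hj&Pj)|N].
  - exact (IH j Hj Pj).
  - exists n; split; auto. intros j Hj Pj; apply N; eauto.
Qed.

Hypothesis Hk : (0 < k)%nat.

Lemma Lex : exists L, (0 < L)%nat /\ Jt L = I1 /\ forall j, (0 < j < L)%nat -> Jt j <> I1.
Proof.
  destruct (min_exists (fun t => (0 < t)%nat /\ Jt t = I1) (2 * k)) as (L&(H1&H2)&H3).
  - split; [lia| apply J2k].
  - exists L; repeat split; auto. intros j Hj E. apply (H3 j); [lia| split; [lia|exact E]].
Qed.

Lemma Jt_reflect s t : Jt s = Jt t -> Nat.even (s + t) = false ->
  forall i, (i <= t)%nat -> Jt (s + i) = Jt (t - i).
Proof.
  intros E Hp i. induction i as [|i IH]; intros Hi.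
  - rewrite Nat.add_0_r, Nat.sub_0_r. exact E.
  - rewrite Nat.add_succ_r, Jt_S.
    replace (t - i)%nat with (S (t - S i)) in IH by lia.
    rewrite <- (back_gimg (t - S i)), <- IH by lia.
    f_equal. f_equal. unfold fl, flof, bl. rewrite IH by lia.
    replace (S (t - S i)) with (t - i)%nat by lia.
    assert (Hq : Nat.even ((s + i) + (t - i)) = false) by (replace ((s + i) + (t - i))%nat with (s + t)%nat by lia; exact Hp).
    rewrite Nat.even_add in Hq.
    destruct (Nat.even (s + i)), (Nat.even (t - i)); simpl in Hq; try discriminate; reflexivity.
Qed.

Section Period.
Variable L : nat.
Hypotheses (HL0 : (0 < L)%nat) (HLJ : Jt L = I1) (HLmin : forall j, (0 < j < L)%nat -> Jt j <> I1).

Lemma L_even : Nat.even L = true.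
Proof.
  destruct (Nat.even L) eqn:E; [reflexivity|exfalso].
  assert (Ho : Nat.odd L = true) by (rewrite <- Nat.negb_even, E; reflexivity).
  apply Nat.odd_spec in Ho as (j&Hj).
  assert (R := Jt_reflect 0 L (eq_sym HLJ) ltac:(simpl; exact E) j ltac:(lia)).
  simpl in R. replace (L - j)%nat with (S j) in R by lia.
  rewrite Jt_S in R. apply (gimg_neq (fl j) (Jt j) (Jt_PG j)). symmetry; exact R.
Qed.

Lemma even_plusL t : Nat.even (t + L) = Nat.even t.
Proof. rewrite Nat.even_add, L_even. destruct (Nat.even t); reflexivity. Qed.

Lemma Jt_per t : Jt (t + L) = Jt t.
Proof. induction t as [|t IH]; [exact HLJ|].
  simpl plus. rewrite !Jt_S. unfold fl, flof. rewrite IH, even_plusL. reflexivity. Qed.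

Lemma fl_per t : fl (t + L) = fl t.
Proof. unfold fl, flof. rewrite Jt_per, even_plusL. reflexivity. Qed.

Lemma fword_per s m : fword (s + L) m = fword s m.
Proof. induction m as [|m IH]; [reflexivity|]. simpl fword. rewrite IH.
  replace (s + L + m)%nat with ((s + m) + L)%nat by lia. rewrite fl_per. reflexivity. Qed.

Lemma fword_perm c m : fword (c * L) m = fword 0 m.
Proof. induction c as [|c IH]; [reflexivity|]. rewrite Nat.mul_succ_l, fword_per. exact IH. Qed.

Lemma Jt_perm c : Jt (c * L) = I1.
Proof. induction c as [|c IH]; [reflexivity|]. rewrite Nat.mul_succ_l, Jt_per. exact IH. Qed.

Lemma Jt_div t : Jt t = I1 -> exists c, t = (c * L)%nat.
Proof.
  revert t. apply (well_founded_induction lt_wf (fun t => Jt t = I1 -> exists c, t = (c * L)%nat)).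
  intros t IH Ht.
  destruct (Nat.lt_ge_cases t L) as [Hl|Hl].
  - destruct t as [|t]; [exists 0%nat; reflexivity|]. exfalso; apply (HLmin (S t)); [lia|exact Ht].
  - destruct (IH (t - L)%nat ltac:(lia)) as (c&Hc).
    + rewrite <- (Jt_per (t - L)). replace (t - L + L)%nat with t by lia. exact Ht.
    + exists (S c). rewrite Nat.mul_succ_l. lia.
Qed.

Definition h (x : S1) : S1 := evalw (fword 0 L) x.

Lemma iter_comm (f : S1 -> S1) n x : Nat.iter n f (f x) = f (Nat.iter n f x).
Proof. induction n as [|n IH]; [reflexivity|]. simpl. rewrite IH. reflexivity. Qed.

Lemma iter_add (f : S1 -> S1) m n x : Nat.iter (m + n) f x = Nat.iter m f (Nat.iter n f x).
Proof. induction m as [|m IH]; [reflexivity|]. simpl. rewrite IH. reflexivity. Qed.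

Lemma h_iter c x : evalw (fword 0 (c * L)) x = Nat.iter c h x.
Proof. induction c as [|c IH]; [reflexivity|].
  rewrite Nat.mul_succ_l, fword_app, Nat.add_0_l, fword_perm, IH. reflexivity. Qed.

Lemma F1_iter : exists c0, (0 < c0)%nat /\ forall x, F1 x = Nat.iter c0 h x.
Proof. destruct (Jt_div _ J2k) as (c0&Hc0). exists c0. split.
  - destruct c0; simpl in Hc0; lia.
  - intros x. unfold F1. rewrite Hc0. apply h_iter. Qed.

Lemma h_gimg : gimg h I1 = I1.
Proof. pose proof (fword_gimg 0 L) as E. rewrite Nat.add_0_l, HLJ in E. exact E. Qed.

Lemma h_fst : h (fst I1) = fst I1.
Proof. pose proof h_gimg as E. destruct I1 as [p q]. unfold gimg in E; simpl in *. injection E; auto. Qed.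

Lemma h_OA x : OA I1 x -> OA I1 (h x).
Proof. intros H. rewrite <- h_gimg. apply evalw_oarc, H. Qed.

Lemma iter_OA c x : OA I1 x -> OA I1 (Nat.iter c h x).
Proof. intros H; induction c as [|c IH]; [exact H|]. simpl. apply h_OA, IH. Qed.

Lemma iter_fst c : Nat.iter c h (fst I1) = fst I1.
Proof. induction c as [|c IH]; [reflexivity|]. simpl. rewrite IH. apply h_fst. Qed.

Lemma iter_ccw c x y z : ccw x y z -> ccw (Nat.iter c h x) (Nat.iter c h y) (Nat.iter c h z).
Proof. intros H; induction c as [|c IH]; [exact H|]. simpl. apply evalw_ccw; auto. Qed.

Lemma iter_mono c x y : ccw (fst I1) x y -> ccw (fst I1) (Nat.iter c h x) (Nat.iter c h y).
Proof. intros H. rewrite <- (iter_fst c) at 1. apply iter_ccw, H. Qed.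

Lemma OA_neq x : OA I1 x -> x <> fst I1.
Proof. intros [H|[_ H]] E; [apply ccw_neq in H; destruct H as (N&_); exact (N (eq_sym E))| exact (H E)]. Qed.

Lemma R_total x y : OA I1 x -> OA I1 y -> x <> y -> ccw (fst I1) x y \/ ccw (fst I1) y x.
Proof. intros Hx Hy N. destruct (ccw_total (fst I1) x y) as [C|C].
  - intros E; apply (OA_neq x Hx); auto.
  - exact N.
  - intros E; apply (OA_neq y Hy); auto.
  - left; exact C.
  - right; apply ccw_cyc, ccw_cyc, C. Qed.

Lemma h_nofix x : OA I1 x -> h x <> x.
Proof. intros Hx E. destruct Hstar as [H1 _]. destruct F1_iter as (c0&_&Hc).
  apply (H1 x Hx). rewrite chainF_F1, Hc. clear Hc H1. induction c0 as [|c IH]; [reflexivity|].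
  simpl. rewrite IH. exact E. Qed.

Lemma iter_up x : ccw (fst I1) x (h x) -> forall c, (0 < c)%nat -> ccw (fst I1) x (Nat.iter c h x).
Proof. intros H c Hc. induction c as [|c IH]; [lia|].
  destruct c as [|c]; [exact H|].
  apply (ccw_trans_base _ _ (Nat.iter (S c) h x)); [apply IH; lia|].
  change (Nat.iter (S (S c)) h x) with (h (Nat.iter (S c) h x)).
  rewrite <- iter_comm. apply iter_mono, H. Qed.

Lemma iter_down x : ccw (fst I1) (h x) x -> forall c, (0 < c)%nat -> ccw (fst I1) (Nat.iter c h x) x.
Proof. intros H c Hc. induction c as [|c IH]; [lia|].
  destruct c as [|c]; [exact H|].
  apply (ccw_trans_base _ _ (Nat.iter (S c) h x)); [|apply IH; lia].
  change (Nat.iter (S (S c)) h x) with (h (Nat.iter (S c) h x)).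
  rewrite <- iter_comm. apply iter_mono, H. Qed.

Lemma iter_nofix c x : (0 < c)%nat -> OA I1 x -> Nat.iter c h x <> x.
Proof. intros Hc Hx E. destruct (R_total x (h x) Hx (h_OA x Hx) (not_eq_sym (h_nofix x Hx))) as [C|C].
  - pose proof (iter_up x C c Hc) as C'. rewrite E in C'. apply ccw_neq in C'; tauto.
  - pose proof (iter_down x C c Hc) as C'. rewrite E in C'. apply ccw_neq in C'; tauto. Qed.

Lemma walk_I1 x0 w : OA I1 x0 -> reduced w = true -> OA I1 (evalw w x0) ->
  w = [] \/ (exists c, (0 < c)%nat /\ evalw w x0 = Nat.iter c h x0) \/
  (exists c, (0 < c)%nat /\ Nat.iter c h (evalw w x0) = x0).
Proof.
  intros Hx0 Hr Hy. set (n := length w). set (s := (n * L)%nat).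
  assert (Hs : OA (Jt s) x0) by (unfold s; rewrite Jt_perm; exact Hx0).
  assert (Hl : (length w <= s)%nat) by (unfold s, n; nia).
  destruct (pwalk s x0 Hs w Hr Hl) as [E|[(m&w'&E&Hlen&Hev&Ho)|[(m&w'&E&Hlen&Hev&Ho)|[(l&w'&E&N&HB)|(w'&E&HA)]]]].
  - left; exact E.
  - right; left. destruct (Jt_div _ (Jt_OA_I1 _ _ Ho Hy)) as (d&Hd).
    assert (Hm : S m = ((d - n) * L)%nat) by (rewrite Nat.mul_sub_distr_r; unfold s in Hd; lia).
    exists (d - n)%nat. split; [destruct (d - n)%nat; simpl in Hm; lia|].
    rewrite Hev. unfold s. rewrite fword_perm, Hm. apply h_iter.
  - right; right. destruct (Jt_div _ (Jt_OA_I1 _ _ Ho Hy)) as (d&Hd).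
    assert (Hm : S m = ((n - d) * L)%nat) by (rewrite Nat.mul_sub_distr_r; unfold s in Hd; lia).
    exists (n - d)%nat. split; [destruct (n - d)%nat; simpl in Hm; lia|].
    rewrite <- h_iter, <- Hm. rewrite <- Hev at 2. rewrite Hd, fword_perm. reflexivity.
  - exfalso. apply (proj2 (PG_oarc_not I1 _ HI1 Hy)), HB.
  - exfalso. apply (proj1 (PG_oarc_not I1 _ HI1 Hy)), HA.
Qed.

Lemma free x0 w : OA I1 x0 -> reduced w = true -> evalw w x0 = x0 -> w = [].
Proof. intros Hx0 Hr E. assert (Hy : OA I1 (evalw w x0)) by (rewrite E; exact Hx0).
  destruct (walk_I1 x0 w Hx0 Hr Hy) as [H|[(c&Hc&H)|(c&Hc&H)]]; [exact H| |]; exfalso.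
  - apply (iter_nofix c x0 Hc Hx0). rewrite <- H, E. reflexivity.
  - rewrite E in H. exact (iter_nofix c x0 Hc Hx0 H). Qed.

Lemma orbitQ x0 y : OA I1 x0 -> orbit a b x0 y -> OA I1 y ->
  exists i j, Nat.iter i h y = Nat.iter j h x0.
Proof. intros Hx0 [g Hg] Hy. destruct g as [w Hr]. unfold phi in Hg; simpl in Hg. subst y.
  destruct (walk_I1 x0 w Hx0 Hr Hy) as [H|[(c&Hc&H)|(c&Hc&H)]].
  - subst w. exists 0%nat, 0%nat. reflexivity.
  - exists 0%nat, c. exact H.
  - exists c, 0%nat. exact H. Qed.


Hypotheses (UA : UnionOfArcs k A) (UB : UnionOfArcs k B) (UBi : UnionOfArcs k Bi).

Lemma X_gap z : ~ X z -> exists p q, isGap X p q /\ oarc p q z.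
Proof.
  intros Nz.
  destruct UA as (uA&vA&HA1&_&HA3). destruct UB as (uB&vB&HB1&_&HB3).
  destruct UBi as (uC&vC&HC1&_&HC3).
  set (U := fun i => if lt_dec i k then uA i else if lt_dec i (2 * k) then uB (i - k)%nat else uC (i - 2 * k)%nat).
  set (V := fun i => if lt_dec i k then vA i else if lt_dec i (2 * k) then vB (i - k)%nat else vC (i - 2 * k)%nat).
  apply (gap_exists_gen (3 * k) U V); auto.
  - lia.
  - intros i Hi. unfold U, V. destruct (lt_dec i k); [apply HA1; lia|].
    destruct (lt_dec i (2 * k)); [apply HB1; lia| apply HC1; lia].
  - intros x. split.
    + intros [Hx|[Hx|Hx]].
      * apply HA3 in Hx as (i&Hi&Hc). exists i. unfold U, V. destruct (lt_dec i k); [split; [lia|exact Hc]|lia].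
      * apply HB3 in Hx as (i&Hi&Hc). exists (k + i)%nat. unfold U, V.
        destruct (lt_dec (k + i) k); [lia|]. destruct (lt_dec (k + i) (2 * k)); [|lia].
        replace (k + i - k)%nat with i by lia. split; [lia|exact Hc].
      * apply HC3 in Hx as (i&Hi&Hc). exists (2 * k + i)%nat. unfold U, V.
        destruct (lt_dec (2 * k + i) k); [lia|]. destruct (lt_dec (2 * k + i) (2 * k)); [lia|].
        replace (2 * k + i - 2 * k)%nat with i by lia. split; [lia|exact Hc].
    + intros (i&Hi&Hc). unfold U, V in Hc. destruct (lt_dec i k).
      * left; apply HA3; exists i; auto.
      * destruct (lt_dec i (2 * k)).
        -- right; left; apply HB3; exists (i - k)%nat; split; [lia|exact Hc].
        -- right; right; apply HC3; exists (i - 2 * k)%nat; split; [lia|exact Hc].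
Qed.

Hypothesis HE3 : forall J J', PG J -> PG J' -> clos_refl_sym_trans _ (gapEdge a b A B Bi) J J'.

Lemma reach J J' : clos_refl_sym_trans _ (gapEdge a b A B Bi) J J' -> exists u, gimg (evalw u) J = J'.
Proof.
  intros H. induction H as [J J' He|J|J J' _ (u&Hu)|J1 J2 J3 _ (u1&H1) _ (u2&H2)].
  - destruct He as (_&_&[E|[E|E]]); subst.
    + exists [LA]; reflexivity.
    + exists [LB]; reflexivity.
    + exists [LB2]; reflexivity.
  - exists []. destruct J; reflexivity.
  - exists (winv u). subst J'. destruct J as [p q]. unfold gimg; simpl. rewrite !evalw_winv; auto.
  - exists (u2 ++ u1). subst. destruct J1 as [p q]. unfold gimg; simpl. rewrite !evalw_app; auto.
Qed.

Lemma to_I1 z : ~ X z -> exists u, OA I1 (evalw u z).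
Proof.
  intros Nz. destruct (X_gap z Nz) as (p&q&G&Hz).
  destruct (gap_class p q G) as [P|C].
  - destruct (reach _ _ (HE3 _ _ P HI1)) as (u&Hu). exists u. rewrite <- Hu.
    apply evalw_oarc, Hz.
  - pose proof (CG_b _ C) as P. destruct (reach _ _ (HE3 _ _ P HI1)) as (u&Hu).
    exists (u ++ [LB]). rewrite evalw_app, <- Hu. apply evalw_oarc.
    change (evalw [LB] z) with (lf LB z). change (gimg b (p, q)) with (gimg (lf LB) (p, q)). apply lf_oarc, Hz.
Qed.
Hypothesis HSS : StarStarProp a b A B Bi.

Lemma OA_ccw x : OA I1 x <-> ccw (fst I1) x (snd I1).
Proof. unfold OA, oarc. pose proof (PG_neq _ HI1). split; [intros [H'|[E _]]; [exact H'|contradiction]| intros; left; auto]. Qed.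

Lemma orbit_closure x0 y : orbit a b x0 y -> closure (orbit a b x0) y.
Proof. intros H eps He. exists y; split; auto. rewrite dist_self; exact He. Qed.

Lemma iter_F1 c0 n x : (forall y, F1 y = Nat.iter c0 h y) -> Nat.iter n F1 x = Nat.iter (n * c0) h x.
Proof. intros Hc. induction n as [|n IH]; [reflexivity|].
  simpl Nat.iter at 1. rewrite IH, Hc, Nat.mul_succ_l, Nat.add_comm. rewrite iter_add. reflexivity. Qed.

Lemma consec_I1 x0 z : OA I1 x0 -> OA I1 z -> ~ orbit a b x0 z ->
  exists u v, orbit a b x0 u /\ orbit a b x0 v /\ oarc u v z /\
    forall o, oarc u v o -> orbit a b x0 o -> False.
Proof.
  intros Hx0 Hz Nz. pose proof Hstar as [_ Hconv].
  destruct F1_iter as (c0&Hc0p&Hc0).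
  set (p1 := fst I1). set (q1 := snd I1).
  assert (Hsurj : forall y, OA I1 y -> orbit a b x0 y -> exists y', OA I1 y' /\ orbit a b x0 y' /\ h y' = y).
  { intros y Hy Oy. exists (evalw (winv (fword 0 L)) y). repeat split.
    - assert (E : gimg (evalw (winv (fword 0 L))) I1 = I1).
      { rewrite <- h_gimg at 1. destruct I1 as [p q]. unfold gimg, h; simpl. rewrite !evalw_winv; auto. }
      rewrite <- E. apply evalw_oarc, Hy.
    - apply orbit_evalw; auto.
    - unfold h. apply evalw_winv'; auto. }
  assert (hO : forall y, orbit a b x0 y -> orbit a b x0 (h y)) by (intros y Hy; apply orbit_evalw; auto).
  assert (Hit : forall n y, Nat.iter n (chainF a b A B Bi k I1) y = Nat.iter (n * c0) h y).
  { intros n y. rewrite (iter_ext _ F1) by apply chainF_F1. apply iter_F1, Hc0. }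
  assert (hm : forall x y, ccw p1 x y -> ccw p1 (h x) (h y)) by (intros x y H; apply (iter_mono 1), H).
  destruct (PG_A _ HI1) as [He|He].
  - (* attracting endpoint is fst : decreasing order *)
    destruct (consec (OA I1) (orbit a b x0) (fun x y => ccw p1 y x) h x0) with (z := z)
      as (u&Ou&Du&H1&H2&H3); auto.
    + intros x y w A1 A2. exact (ccw_trans_base _ _ _ _ A2 A1).
    + intros x y A1. apply ccw_asym_base, A1.
    + intros x y Dx Dy N. destruct (R_total x y Dx Dy N); auto.
    + apply h_OA.
    + apply orbit_self.
    + apply h_nofix.
    + intros w Hw. apply OA_ccw in Hw. destruct (conv_fst _ _ _ Hw) as (eps&Heps&Hf).
      destruct (Hconv _ He (or_introl eq_refl) x0 Hx0 eps Heps) as (N&HN).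
      exists (N * c0)%nat. rewrite <- Hit. apply Hf; [apply OA_ccw; rewrite Hit; apply iter_OA, Hx0|].
      apply HN; lia.
    + intros w Hw. pose proof Hx0 as Hx0'. apply OA_ccw in Hx0'. destruct (conv_fst _ _ _ Hx0') as (eps&Heps&Hf).
      destruct (Hconv _ He (or_introl eq_refl) w Hw eps Heps) as (N&HN).
      exists (N * c0)%nat. rewrite <- Hit. apply Hf; [apply OA_ccw; rewrite Hit; apply iter_OA, Hw|].
      apply HN; lia.
    + intros y Dy Oy. apply (orbitQ x0 y Hx0 Oy Dy).
    + exists (h u), u. repeat split; auto.
      * left. apply (between3 p1); auto.
      * intros o Ho Oo.
        assert (Dhu : ccw p1 (h u) q1) by (apply OA_ccw, h_OA, Du).
        assert (Du' : ccw p1 u q1) by (apply OA_ccw, Du).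
        assert (C : ccw p1 (h u) u) by (exact (ccw_trans_base _ _ _ _ H2 H1)).
        destruct (arc_between p1 q1 (h u) u o Dhu Du' C Ho) as (B1&B2&B3).
        apply (H3 o); auto. apply OA_ccw, B1.
  - (* attracting endpoint is snd : increasing order *)
    destruct (consec (OA I1) (orbit a b x0) (fun x y => ccw p1 x y) h x0) with (z := z)
      as (u&Ou&Du&H1&H2&H3); auto.
    + intros x y w A1 A2. exact (ccw_trans_base _ _ _ _ A1 A2).
    + intros x y A1. apply ccw_asym_base, A1.
    + intros x y Dx Dy N. exact (R_total x y Dx Dy N).
    + apply h_OA.
    + apply orbit_self.
    + apply h_nofix.
    + intros w Hw. apply OA_ccw in Hw. destruct (conv_snd _ _ _ Hw) as (eps&Heps&Hf).
      destruct (Hconv _ He (or_intror eq_refl) x0 Hx0 eps Heps) as (N&HN).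
      exists (N * c0)%nat. rewrite <- Hit.
      assert (Hw' : ccw p1 (Nat.iter N (chainF a b A B Bi k I1) x0) q1)
        by (apply OA_ccw; rewrite Hit; apply iter_OA, Hx0).
      apply (base_snd p1 _ _ q1 Hw Hw'). apply Hf; [exact Hw'| apply HN; lia].
    + intros w Hw. pose proof Hx0 as Hx0'. apply OA_ccw in Hx0'. destruct (conv_snd _ _ _ Hx0') as (eps&Heps&Hf).
      destruct (Hconv _ He (or_intror eq_refl) w Hw eps Heps) as (N&HN).
      exists (N * c0)%nat. rewrite <- Hit.
      assert (Hw' : ccw p1 (Nat.iter N (chainF a b A B Bi k I1) w) q1)
        by (apply OA_ccw; rewrite Hit; apply iter_OA, Hw).
      apply (base_snd p1 _ _ q1 Hx0' Hw'). apply Hf; [exact Hw'| apply HN; lia].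
    + intros y Dy Oy. apply (orbitQ x0 y Hx0 Oy Dy).
    + exists u, (h u). repeat split; auto.
      * left. apply (between3 p1); auto.
      * intros o Ho Oo.
        assert (Dhu : ccw p1 (h u) q1) by (apply OA_ccw, h_OA, Du).
        assert (Du' : ccw p1 u q1) by (apply OA_ccw, Du).
        assert (C : ccw p1 u (h u)) by (exact (ccw_trans_base _ _ _ _ H1 H2)).
        destruct (arc_between p1 q1 u (h u) o Du' Dhu C Ho) as (B1&B2&B3).
        apply (H3 o); auto. apply OA_ccw, B1.
Qed.

Lemma tight x0 : OA I1 x0 -> forall p q, isGap (closure (orbit a b x0)) p q ->
  orbit a b x0 p /\ orbit a b x0 q.
Proof.
  intros Hx0 p q G. set (K := closure (orbit a b x0)) in *.
  pose proof G as (Kp&Kq&(x&Hx)&GK).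
  destruct (ball_oarc _ _ _ Hx) as (eps&Heps&Hball).
  pose proof (HSS x eps Heps) as HS.
  apply not_all_ex_not in HS as (y&Hy). apply imply_to_and in Hy as (Hdy&Hy).
  apply not_all_ex_not in Hy as (g&Hg).
  assert (Hyo : oarc p q y) by (apply Hball, Hdy).
  destruct (to_I1 _ Hg) as (u0&Hu0).
  set (U := (u0 ++ proj1_sig g)).
  assert (HzI : OA I1 (evalw U y)) by (unfold U; rewrite evalw_app; exact Hu0).
  set (z := evalw U y) in *.
  assert (KU : forall w, K w -> K (evalw U w)) by (intros w Hw; apply closure_evalw; auto).
  assert (KU' : forall w, K w -> K (evalw (winv U) w)) by (intros w Hw; apply closure_evalw; auto).
  assert (G2 : isGap K (evalw U p) (evalw U q)) by (apply isGap_evalw; auto).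
  assert (Hz2 : oarc (evalw U p) (evalw U q) z) by (apply oarc_evalw; auto).
  assert (NzK : ~ K z) by (exact (proj2 (proj2 (proj2 G2)) z Hz2)).
  assert (Nz : ~ orbit a b x0 z) by (intros Oz; apply NzK, orbit_closure, Oz).
  destruct (consec_I1 x0 z Hx0 HzI Nz) as (u&v&Ou&Ov&Huv&Hno).
  assert (G3 : isGap K u v).
  { repeat split.
    - apply orbit_closure, Ou.
    - apply orbit_closure, Ov.
    - exists z; exact Huv.
    - intros w Hw Kw. destruct (ball_oarc _ _ _ Hw) as (e'&He'&Hb').
      destruct (Kw e' He') as (o&Oo&Hdo). exact (Hno o (Hb' o Hdo) Oo). }
  destruct (gap_unique _ _ _ _ _ _ G2 G3 Hz2 Huv) as [E1 E2].
  split.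
  - rewrite <- (evalw_winv a b Haa Hbbb U p), E1. apply orbit_evalw; auto.
  - rewrite <- (evalw_winv a b Haa Hbbb U q), E2. apply orbit_evalw; auto.
Qed.
Lemma sgp_evalw u x y z : sgp (evalw u x) (evalw u y) (evalw u z) = sgp x y z.
Proof.
  destruct (sg3_vals (pos x) (pos y) (pos z)) as [E|[E|E]]; fold (sgp x y z) in E; rewrite E.
  - apply sgp_zero in E. apply sgp_zero. destruct E as [E|[E|E]]; rewrite E; auto.
  - apply sgp_one in E. apply sgp_one. apply evalw_ccw; auto.
  - apply sgp_mone in E. apply sgp_mone. apply evalw_ccw; auto.
Qed.

Lemma main_in : exists c : G -> G -> G -> Z,
    circular_order c /\
    exists x0 : S1, oarc (fst I1) (snd I1) x0 /\ dyn_realization a b c x0.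
Proof.
  pose proof HI1 as [(_&_&(x0&Hx0)&_) _].
  assert (Free : forall g : G, phi a b g x0 = x0 -> g = gid).
  { intros [w Hw] E. apply G_eq. simpl. unfold phi in E; simpl in E. exact (free x0 w Hx0 Hw E). }
  exists (fun g1 g2 g3 => sgp (phi a b g1 x0) (phi a b g2 x0) (phi a b g3 x0)).
  split.
  - repeat split.
    + intros g1 g2 g3. apply sg3_vals.
    + intros H. apply sgp_zero in H. destruct H as [E|[E|E]]; apply (phi_inj a b Haa Hbbb x0 Free) in E; auto.
    + intros H. apply sgp_zero. destruct H as [E|[E|E]]; subst; auto.
    + intros g1 g2 g3 g4. unfold sgp. apply sg3_cocycle.
    + intros g1 g2 g3 g4. rewrite !phi_gmul by auto. unfold phi at 1 3 5. apply sgp_evalw.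
  - exists x0. split; [exact Hx0|]. split.
    + split; [exact Free|]. apply tight, Hx0.
    + intros g1 g2 g3. split; [apply sgp_one| apply sgp_mone].
Qed.
End Period.
End Markov2.

Theorem lemma11p6 (k : nat) (a b : S1 -> S1) (A B Bi : S1 -> Prop)
  (I1 : S1 * S1) :
  MarkovSystem a b A B Bi k ->
  PrincipalGap A B Bi I1 ->
  StarProp a b A B Bi k I1 ->
  StarStarProp a b A B Bi ->
  exists c : G -> G -> G -> Z,
    circular_order c /\
    exists x0 : S1, oarc (fst I1) (snd I1) x0 /\ dyn_realization a b c x0.
Proof.
  intros HM HI1 Hstar HSS.
  destruct HM as (Hk&Ha&Haa&_&Hb&Hbbb&_&UA&UB&UBi&dAB&dABi&dBBi&HBc&HC&HD1&HD2&HE1&HE2&HE3).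
  destruct (Lex a b A B Bi k Ha Haa Hb Hbbb dAB dABi HD1 HD2 HE1 I1 HI1 Hstar Hk)
    as (L&HL0&HLJ&HLmin).
  exact (main_in a b A B Bi k Ha Haa Hb Hbbb dAB dABi HBc HC HD1 HD2 HE1 I1 HI1 Hstar Hk
           L HL0 HLJ HLmin UA UB UBi HE3 HSS).
Qed.
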